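(* Let $N$ be a positive integer and let $f:\mathbb{N}\to\mathbb{C}$ be periodic with period $N$. Let $a_n(q)$ be the sequence of polynomials in $q$ defined recursively by \[ a_0(q)=0,\qquad a_n(q) = f(n) + \left(1-q^{n-1}\right)a_{n-1}(q) \quad \text{for } n\in\mathbb{N}. \] Set $\zeta_N:=e^{2\pi i/N}$ and, for integers $k$, \[ c_k := \frac{1}{N}\sum_{1\le j\le N} f(j)\,\zeta_N^{(1-j)k}. \] Then for $q\in\mathbb{C}$ with $|q|<1$ the limit below exists and \[ \lim_{n\rightarrow\infty}\left( \sum_{1\le\ell\le n} f(\ell) - a_n(q)\right) = c_0S_0(q) - (q;q)_\infty \sum_{1\le k\le N-1} \frac{c_k}{(\zeta_N^k;q)_\infty} + \sum_{1\le k\le N-1} \frac{c_k}{1-\zeta_N^k}. \]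
   Context: For $n\in\mathbb{N}_0\cup\{\infty\}$, $(a;q)_n := \prod_{j=0}^{n-1}(1-aq^j)$. $S_0(q):=\sum_{n\ge1}\sigma_0(n)q^n$, where $\sigma_0(n)=\sum_{d\mid n}1$ is the number of positive divisors of $n$. *)

(* Defs.v *)
From Stdlib Require Import Reals ZArith List Arith.
From Coquelicot Require Import Coquelicot.
Open Scope C_scope.

Definition Cpowz (z : C) (m : Z) : C :=
  if (0 <=? m)%Z then Cpow z (Z.to_nat m) else / Cpow z (Z.to_nat (- m)).

(* Csum F m n = F m + F (m+1) + ... + F n  (0 if n < m) *)
Definition Csum (F : nat -> C) (m n : nat) : C :=
  fold_right Cplus 0 (map F (seq m (S n - m))).

(* limit of a sequence in C (total operator; meaningful when the sequence converges) *)
Definition Clim (u : nat -> C) : C :=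
  @lim C_CompleteNormedModule (filtermap u eventually).

Fixpoint qpoch (a q : C) (n : nat) : C :=
  match n with O => 1 | S m => qpoch a q m * (1 - a * Cpow q m) end.

Definition qpoch_inf (a q : C) : C := Clim (qpoch a q).

Definition sigma0 (n : nat) : nat :=
  length (filter (fun d => Nat.eqb (n mod d) 0) (seq 1 n)).

Definition S0 (q : C) : C :=
  Clim (fun n => Csum (fun m => RtoC (INR (sigma0 m)) * Cpow q m) 1 n).

Fixpoint aseq (f : nat -> C) (q : C) (n : nat) : C :=
  match n with
  | O => 0
  | S m => f (S m) + (1 - Cpow q m) * aseq f q m
  end.

Definition zetaN (N : nat) : C := (cos (2 * PI / INR N), sin (2 * PI / INR N)).

Definition ccoef (f : nat -> C) (N : nat) (k : Z) : C :=
  / RtoC (INR N) *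
  Csum (fun j => f j * Cpowz (zetaN N) ((1 - Z.of_nat j) * k)%Z) 1 N.

(* Main.v *)
Require Import Defs.
From Stdlib Require Import Reals ZArith List Arith Lia Lra.
From Coquelicot Require Import Coquelicot.
Open Scope C_scope.

Open Scope C_scope.

Fixpoint sumC (F : nat -> C) (n : nat) : C :=
  match n with O => 0 | S m => sumC F m + F m end.

Lemma sumC_ext (F G : nat -> C) n : (forall i, (i < n)%nat -> F i = G i) -> sumC F n = sumC G n.
Proof. induction n; simpl; intros H; auto. rewrite IHn by (intros; apply H; lia).
  rewrite H by lia. auto. Qed.

Lemma sumC_plus (F G : nat -> C) n : sumC (fun i => F i + G i) n = sumC F n + sumC G n.
Proof. induction n; simpl. ring. rewrite IHn. ring. Qed.

Lemma sumC_minus (F G : nat -> C) n : sumC (fun i => F i - G i) n = sumC F n - sumC G n.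
Proof. induction n; simpl. ring. rewrite IHn. ring. Qed.

Lemma sumC_scal (c : C) (F : nat -> C) n : sumC (fun i => c * F i) n = c * sumC F n.
Proof. induction n; simpl. ring. rewrite IHn. ring. Qed.

Lemma sumC_zero n : sumC (fun _ => 0) n = 0.
Proof. induction n; simpl. auto. rewrite IHn. ring. Qed.

Lemma sumC_shift (F : nat -> C) n : sumC F (S n) = F 0%nat + sumC (fun i => F (S i)) n.
Proof. induction n. simpl. ring. change (sumC F (S (S n))) with (sumC F (S n) + F (S n)).
  rewrite IHn. simpl. ring. Qed.

Lemma sumC_swap (F : nat -> nat -> C) m n :
  sumC (fun i => sumC (fun j => F i j) n) m = sumC (fun j => sumC (fun i => F i j) m) n.
Proof. induction m; simpl. rewrite sumC_zero. auto.
  rewrite IHm. rewrite <- sumC_plus. auto. Qed.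

Lemma sumC_split (F : nat -> C) m k : sumC F (m + k) = sumC F m + sumC (fun i => F (m + i)%nat) k.
Proof. induction k; simpl. rewrite Nat.add_0_r. ring.
  rewrite Nat.add_succ_r. simpl. rewrite IHk. ring. Qed.

Lemma sumC_bound (F : nat -> C) n M : (forall i, (i < n)%nat -> (Cmod (F i) <= M)%R) ->
  (Cmod (sumC F n) <= INR n * M)%R.
Proof. induction n; cbn [sumC]; intros H. rewrite Cmod_0. simpl. lra.
  eapply Rle_trans. apply Cmod_triangle. rewrite S_INR.
  assert (H1 := IHn (fun i Hi => H i ltac:(lia))). assert (H2 := H n ltac:(lia)). lra. Qed.

Lemma sumC_single (F : nat -> C) n i0 : (i0 < n)%nat -> (forall i, (i < n)%nat -> i <> i0 -> F i = 0) ->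
  sumC F n = F i0.
Proof. induction n; intros Hi H. lia. simpl.
  destruct (Nat.eq_dec i0 n) as [->|Hne].
  - rewrite (sumC_ext F (fun _ => 0)). rewrite sumC_zero. ring.
    intros i Hi'. apply H; lia.
  - rewrite IHn; try lia. rewrite (H n); try lia. ring. intros; apply H; lia. Qed.

Lemma fold_sumC (F : nat -> C) m k : fold_right Cplus 0 (map F (seq m k)) = sumC (fun i => F (m + i)%nat) k.
Proof. revert m; induction k; intros m. simpl. auto.
  rewrite sumC_shift. simpl. rewrite IHk. rewrite Nat.add_0_r. f_equal.
  apply sumC_ext. intros. f_equal. lia. Qed.

Lemma Csum_sumC (F : nat -> C) n : Csum F 1 n = sumC (fun i => F (S i)) n.
Proof. unfold Csum. replace (S n - 1)%nat with n by lia. rewrite fold_sumC. auto. Qed.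

Definition cv (u : nat -> C) (l : C) := forall eps, (0 < eps)%R ->
  exists N, forall n, (N <= n)%nat -> (Cmod (u n - l) < eps)%R.

Definition null (e : nat -> R) := forall eps, (0 < eps)%R ->
  exists N, forall n, (N <= n)%nat -> (e n < eps)%R.

Lemma cv_ext u v l : (forall n, u n = v n) -> cv u l -> cv v l.
Proof. intros H Hu eps He. destruct (Hu eps He) as [N HN]. exists N. intros n Hn.
  rewrite <- H. auto. Qed.

Lemma cv_const c : cv (fun _ => c) c.
Proof. intros eps He. exists 0%nat. intros. replace (c - c) with (RtoC 0) by ring.
  rewrite Cmod_0. auto. Qed.

Lemma cv_plus u v a b : cv u a -> cv v b -> cv (fun n => u n + v n) (a + b).
Proof. intros Hu Hv eps He. destruct (Hu (eps/2)%R ltac:(lra)) as [N1 H1].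
  destruct (Hv (eps/2)%R ltac:(lra)) as [N2 H2]. exists (max N1 N2). intros n Hn.
  replace (u n + v n - (a + b)) with ((u n - a) + (v n - b)) by ring.
  eapply Rle_lt_trans. apply Cmod_triangle.
  assert (A1 := H1 n ltac:(lia)). assert (A2 := H2 n ltac:(lia)). lra. Qed.

Lemma cv_scal c u a : cv u a -> cv (fun n => c * u n) (c * a).
Proof. intros Hu eps He.
  destruct (Hu (eps / (Cmod c + 1))%R) as [N HN].
  { apply Rdiv_lt_0_compat. auto. generalize (Cmod_ge_0 c). lra. }
  exists N. intros n Hn. replace (c * u n - c * a) with (c * (u n - a)) by ring.
  rewrite Cmod_mult. assert (A := HN n Hn). assert (B := Cmod_ge_0 c).
  assert (B2 := Cmod_ge_0 (u n - a)).
  apply Rle_lt_trans with ((Cmod c + 1) * Cmod (u n - a))%R. nra.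
  replace eps with ((Cmod c + 1) * (eps / (Cmod c + 1)))%R by (field; lra).
  apply Rmult_lt_compat_l; lra. Qed.

Lemma cv_opp u a : cv u a -> cv (fun n => - u n) (- a).
Proof. intros H. apply cv_ext with (fun n => (-1) * u n). intros; ring.
  replace (-a) with ((-1) * a) by ring. apply cv_scal; auto. Qed.

Lemma cv_minus u v a b : cv u a -> cv v b -> cv (fun n => u n - v n) (a - b).
Proof. intros Hu Hv. apply cv_plus; auto. apply cv_opp; auto. Qed.

Lemma cv_bounded u a : cv u a -> exists M, (0 < M)%R /\ forall n, (Cmod (u n) <= M)%R.
Proof. intros H. destruct (H 1%R ltac:(lra)) as [N HN].
  assert (exists M, (0 < M)%R /\ forall n, (n < N)%nat -> (Cmod (u n) <= M)%R) as [M [HM1 HM2]].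
  { clear HN. induction N. exists 1%R. split. lra. intros; lia.
    destruct IHN as [M [HM1 HM2]]. exists (Rmax M (Cmod (u N))). split.
    eapply Rlt_le_trans. apply HM1. apply Rmax_l. intros n Hn.
    destruct (Nat.eq_dec n N). subst. apply Rmax_r. eapply Rle_trans. apply HM2. lia. apply Rmax_l. }
  exists (Rmax M (Cmod a + 1)). split. eapply Rlt_le_trans. apply HM1. apply Rmax_l.
  intros n. destruct (Nat.lt_ge_cases n N). eapply Rle_trans. apply HM2; auto. apply Rmax_l.
  eapply Rle_trans. 2: apply Rmax_r. replace (u n) with ((u n - a) + a) by ring.
  eapply Rle_trans. apply Cmod_triangle. assert (A := HN n H0). lra. Qed.

Lemma cv_mult u v a b : cv u a -> cv v b -> cv (fun n => u n * v n) (a * b).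
Proof. intros Hu Hv. destruct (cv_bounded u a Hu) as [M [HM1 HM2]].
  intros eps He.
  destruct (Hu (eps / (2 * (Cmod b + 1)))%R) as [N1 H1].
  { apply Rdiv_lt_0_compat. auto. generalize (Cmod_ge_0 b). lra. }
  destruct (Hv (eps / (2 * M))%R) as [N2 H2].
  { apply Rdiv_lt_0_compat. auto. lra. }
  exists (max N1 N2). intros n Hn.
  replace (u n * v n - a * b) with (u n * (v n - b) + (u n - a) * b) by ring.
  eapply Rle_lt_trans. apply Cmod_triangle. rewrite !Cmod_mult.
  assert (A1 := H1 n ltac:(lia)). assert (A2 := H2 n ltac:(lia)).
  assert (B1 := HM2 n). assert (C1 := Cmod_ge_0 b). assert (C2 := Cmod_ge_0 (u n)).
  assert (C3 := Cmod_ge_0 (v n - b)). assert (C4 := Cmod_ge_0 (u n - a)).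
  assert (Cmod (u n) * Cmod (v n - b) <= M * (eps / (2 * M)))%R by nra.
  assert (Cmod (u n - a) * Cmod b < (eps / (2 * (Cmod b + 1))) * (Cmod b + 1))%R by nra.
  replace (M * (eps / (2 * M)))%R with (eps/2)%R in H by (field; lra).
  replace (eps / (2 * (Cmod b + 1)) * (Cmod b + 1))%R with (eps/2)%R in H0 by (field; lra).
  lra. Qed.

Lemma cv_inv v b c : cv v b -> (0 < c)%R -> (forall n, (c <= Cmod (v n))%R) -> b <> 0 ->
  cv (fun n => / v n) (/ b).
Proof. intros Hv Hc Hl Hb eps He.
  assert (Hb' : (0 < Cmod b)%R). { apply Rnot_le_lt. intros H. apply Hb. apply Cmod_eq_0.
    generalize (Cmod_ge_0 b). lra. }
  destruct (Hv (eps * c * Cmod b)%R) as [N HN]. { apply Rmult_lt_0_compat. nra. auto. }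
  exists N. intros n Hn.
  assert (Hvn : v n <> 0). { intros E. assert (A := Hl n). rewrite E, Cmod_0 in A. lra. }
  replace (/ v n - / b) with ((b - v n) / (v n * b)) by (field; auto).
  unfold Cdiv. rewrite Cmod_mult. rewrite Cmod_inv. rewrite Cmod_mult.
  2: { apply Cmult_neq_0; auto. }
  replace (b - v n) with (- (v n - b)) by ring. rewrite Cmod_opp.
  assert (A := HN n Hn). assert (B := Hl n).
  apply Rmult_lt_reg_r with (Cmod (v n) * Cmod b)%R. nra.
  rewrite Rmult_assoc, Rinv_l by nra. rewrite Rmult_1_r.
  apply Rlt_le_trans with (eps * c * Cmod b)%R. auto.
  assert (0 <= eps * Cmod b)%R by nra. nra. Qed.

Lemma cv_div u v a b c : cv u a -> cv v b -> (0 < c)%R -> (forall n, (c <= Cmod (v n))%R) -> b <> 0 ->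
  cv (fun n => u n / v n) (a / b).
Proof. intros. apply cv_mult; auto. eapply cv_inv; eauto. Qed.

Lemma cv_unique u a b : cv u a -> cv u b -> a = b.
Proof. intros Ha Hb. cut (a - b = 0). { intros E. replace a with ((a - b) + b) by ring. rewrite E. ring. }
  apply Cmod_eq_0.
  apply Rle_antisym. 2: apply Cmod_ge_0. apply Rnot_lt_le. intros H.
  destruct (Ha (Cmod (a - b) / 2)%R ltac:(lra)) as [N1 H1].
  destruct (Hb (Cmod (a - b) / 2)%R ltac:(lra)) as [N2 H2].
  assert (A1 := H1 (max N1 N2) ltac:(lia)). assert (A2 := H2 (max N1 N2) ltac:(lia)).
  assert (T := Cmod_triangle (- (u (max N1 N2) - a)) (u (max N1 N2) - b)).
  replace (- (u (max N1 N2) - a) + (u (max N1 N2) - b)) with (a - b) in T by ring.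
  rewrite Cmod_opp in T. lra. Qed.

Lemma cv_S u l : cv u l -> cv (fun n => u (S n)) l.
Proof. intros H eps He. destruct (H eps He) as [N HN]. exists N. intros. apply HN. lia. Qed.

Lemma cv_S_inv u l : cv (fun n => u (S n)) l -> cv u l.
Proof. intros H eps He. destruct (H eps He) as [N HN]. exists (S N). intros n Hn.
  destruct n. lia. apply HN. lia. Qed.

Lemma cv_sumN (u : nat -> nat -> C) (l : nat -> C) K :
  (forall k, (k < K)%nat -> cv (u k) (l k)) ->
  cv (fun n => sumC (fun k => u k n) K) (sumC l K).
Proof. induction K; intros H. simpl. apply cv_const.
  simpl. apply cv_plus. apply IHK. intros; apply H; lia. apply H; lia. Qed.

Lemma cv_lower u l c : cv u l -> (forall n, (c <= Cmod (u n))%R) -> (c <= Cmod l)%R.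
Proof. intros H Hc. apply Rnot_lt_le. intros Hlt.
  destruct (H (c - Cmod l)%R ltac:(lra)) as [N HN]. assert (A := HN N (le_n _)).
  assert (B := Hc N). replace (u N) with ((u N - l) + l) in B by ring.
  assert (T := Cmod_triangle (u N - l) l). lra. Qed.

Lemma cv_null u l e : null e -> (exists N, forall n, (N <= n)%nat -> (Cmod (u n - l) <= e n)%R) -> cv u l.
Proof. intros He [N0 H0] eps Heps. destruct (He eps Heps) as [N1 H1]. exists (max N0 N1).
  intros n Hn. eapply Rle_lt_trans. apply H0. lia. apply H1. lia. Qed.

Lemma null_scal e K : null e -> (0 <= K)%R -> null (fun n => K * e n)%R.
Proof. intros H HK eps He. destruct (H (eps / (K + 1))%R) as [N HN].
  apply Rdiv_lt_0_compat; lra. exists N. intros n Hn. assert (A := HN n Hn).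
  destruct (Rle_lt_dec 0 (e n)).
  - apply Rle_lt_trans with ((K+1) * e n)%R. nra.
    replace eps with ((K + 1) * (eps / (K + 1)))%R by (field; lra).
    apply Rmult_lt_compat_l; lra.
  - nra. Qed.

Lemma ball_of_Cmod (x y : C) (e : R) : (Cmod (y - x) < e)%R -> @ball C_UniformSpace x e y.
Proof. intros H. unfold ball; simpl. unfold prod_ball. simpl. unfold ball; simpl.
  unfold AbsRing_ball. simpl. assert (A := Rmax_Cmod (y - x)).
  destruct y as [y1 y2]; destruct x as [x1 x2]. simpl in *.
  unfold abs, minus, plus, opp; simpl. 
  assert (B1 := Rmax_l (Rabs (y1 - x1)) (Rabs (y2 - x2))).
  assert (B2 := Rmax_r (Rabs (y1 - x1)) (Rabs (y2 - x2))).
  split; unfold Rminus in *; lra. Qed.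

Lemma Cmod_of_ball (x y : C) (e : R) : @ball C_UniformSpace x e y -> (Cmod (y - x) < 2 * e)%R.
Proof. unfold ball; simpl. unfold prod_ball. simpl. unfold ball; simpl.
  unfold AbsRing_ball. simpl. intros [H1 H2]. assert (A := Cmod_2Rmax (y - x)).
  destruct y as [y1 y2]; destruct x as [x1 x2]. simpl in *.
  unfold abs, minus, plus, opp in *; simpl in *.
  assert (Rmax (Rabs (y1 + - x1)) (Rabs (y2 + - x2)) < e)%R.
  { apply Rmax_lub_lt; auto. }
  assert (sqrt 2 < 2)%R. { rewrite <- (sqrt_square 2) at 2 by lra. apply sqrt_lt_1; lra. }
  assert (0 <= Rmax (Rabs (y1 + - x1)) (Rabs (y2 + - x2)))%R.
  { eapply Rle_trans. apply Rabs_pos. apply Rmax_l. }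
  assert (0 <= sqrt 2)%R by apply sqrt_pos.
  unfold Rminus in *. nra. Qed.

Lemma cv_filterlim u l : cv u l -> filterlim u eventually (locally l).
Proof. intros H. apply (filterlim_locally u l). intros [eps He]. simpl.
  destruct (H eps He) as [N HN]. exists N. intros n Hn. apply ball_of_Cmod. apply HN. lia. Qed.

Lemma filterlim_cv u l : filterlim u eventually (locally l) -> cv u l.
Proof. intros H eps He. assert (He2 : (0 < eps / 2)%R) by lra.
  destruct (proj1 (filterlim_locally u l) H (mkposreal _ He2)) as [N HN].
  exists N. intros n Hn. assert (A := Cmod_of_ball _ _ _ (HN n Hn)). simpl in A. lra. Qed.

Lemma cauchy_Clim u : (forall eps, (0 < eps)%R -> exists N, forall n, (N <= n)%nat ->
   (Cmod (u n - u N) < eps)%R) -> cv u (Clim u).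
Proof. intros H. apply filterlim_cv. unfold Clim.
  apply (filterlim_locally u). intros eps.
  apply (@complete_cauchy C_CompleteNormedModule (filtermap u eventually)).
  - apply filtermap_proper_filter. apply eventually_filter.
  - intros e. destruct (H e (cond_pos e)) as [N HN]. exists (u N).
    exists N. intros n Hn. apply ball_of_Cmod. apply HN; lia. Qed.

Lemma cv_Clim u l : cv u l -> Clim u = l.
Proof. intros H. apply (cv_unique u). 2: auto. apply cauchy_Clim.
  intros eps He. destruct (H (eps/2)%R ltac:(lra)) as [N HN]. exists N. intros n Hn.
  replace (u n - u N) with ((u n - l) - (u N - l)) by ring.
  eapply Rle_lt_trans. unfold Cminus at 1. apply Cmod_triangle. rewrite Cmod_opp.
  assert (A := HN n Hn). assert (B := HN N (le_n _)). lra. Qed.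

Open Scope C_scope.

Open Scope R_scope.
Lemma null_le (e e' : nat -> R) : null e -> (exists N, forall n, (N <= n)%nat -> (e' n <= e n)%R) -> null e'.
Proof. intros H [N0 H0] eps He. destruct (H eps He) as [N HN]. exists (max N N0). intros n Hn.
  eapply Rle_lt_trans. apply H0. lia. apply HN. lia. Qed.

Lemma bern h n : (0 <= h)%R -> (1 + INR n * h + INR n * (INR n - 1) / 2 * h ^ 2 <= (1 + h) ^ n)%R.
Proof. intros Hh. induction n. simpl. lra.
  rewrite S_INR. replace ((1 + h) ^ S n)%R with ((1 + h) * (1 + h) ^ n)%R by (simpl; ring).
  assert (0 <= INR n * (INR n - 1))%R.
  { clear IHn. destruct n. simpl. lra. rewrite S_INR. assert (A := pos_INR n).
    replace (INR n + 1 - 1)%R with (INR n) by ring. apply Rmult_le_pos; lra. }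
  assert (A := pos_INR n).
  apply Rle_trans with ((1 + h) * (1 + INR n * h + INR n * (INR n - 1) / 2 * h ^ 2))%R.
  2: { apply Rmult_le_compat_l; lra. }
  assert (0 <= INR n * (INR n - 1) / 2 * h ^ 2 * h)%R.
  { apply Rmult_le_pos; [apply Rmult_le_pos|]; auto. lra. apply pow_le; auto. }
  replace (h ^ 2)%R with (h * h)%R in * by ring. nra. Qed.

Lemma null_npow s : (0 <= s < 1)%R -> null (fun n => INR n * s ^ n)%R.
Proof. intros Hs eps He. destruct (Req_dec s 0) as [->|Hs0].
  - exists 1%nat. intros n Hn. destruct n. lia. simpl. lra.
  - set (h := (/ s - 1)%R).
    assert (Hh : (0 < h)%R). { unfold h. assert (1 < / s)%R. { rewrite <- Rinv_1. apply Rinv_lt_contravar; lra. } lra. }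
    assert (Hsh : s = (/ (1 + h))%R). { unfold h. replace (1 + (/ s - 1))%R with (/ s)%R by ring.
      rewrite Rinv_inv. auto. }
    destruct (INR_archimed (eps * h ^ 2 / 2) 1) as [N HN].
    { apply Rdiv_lt_0_compat. apply Rmult_lt_0_compat. auto. apply pow_lt. auto. lra. }
    exists (S (S N)). intros n Hn.
    assert (B := bern h n (Rlt_le _ _ Hh)).
    assert (HnN : (INR N + 1 <= INR n - 1)%R).
    { replace (INR N + 1)%R with (INR (S N)) by (rewrite S_INR; auto).
      apply Rplus_le_reg_r with 1%R. replace (INR n - 1 + 1)%R with (INR n) by ring.
      replace (INR (S N) + 1)%R with (INR (S (S N))) by (rewrite !S_INR; ring). apply le_INR; auto. }
    assert (Hp : (0 < (1 + h) ^ n)%R). { apply pow_lt. lra. }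
    rewrite Hsh. rewrite pow_inv. 
    apply Rmult_lt_reg_r with ((1 + h) ^ n)%R. auto.
    rewrite Rmult_assoc, Rinv_l by lra. rewrite Rmult_1_r.
    assert (A := pos_INR N). assert (A2 := pos_INR n).
    assert (Hh2 : (0 < h ^ 2)%R) by (apply pow_lt; auto).
    assert (INR n < eps * (INR n * (INR n - 1) / 2 * h ^ 2))%R.
    { assert (1 < eps * h ^ 2 / 2 * (INR n - 1))%R.
      { apply Rlt_le_trans with (INR N * (eps * h ^ 2 / 2))%R. lra.
        rewrite Rmult_comm. apply Rmult_le_compat_l. 
        apply Rlt_le. apply Rdiv_lt_0_compat. apply Rmult_lt_0_compat; auto. lra. lra. }
      assert (0 < INR n)%R. { apply lt_0_INR. lia. }
      replace (eps * (INR n * (INR n - 1) / 2 * h ^ 2))%R with (INR n * (eps * h ^ 2 / 2 * (INR n - 1)))%R by field.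
      nra. }
    assert (0 <= INR n * h)%R by nra. nra. Qed.

Lemma null_n2pow r : (0 <= r < 1)%R -> null (fun n => INR n * INR n * r ^ n)%R.
Proof. intros Hr eps He. set (s := sqrt r).
  assert (Hs : (0 <= s < 1)%R). { unfold s. split. apply sqrt_pos.
    rewrite <- sqrt_1. apply sqrt_lt_1; lra. }
  assert (Hrs : r = (s * s)%R). { unfold s. rewrite sqrt_sqrt; lra. }
  destruct (null_npow s Hs (Rmin 1 eps)) as [N HN]. { apply Rmin_glb_lt; lra. }
  exists N. intros n Hn. assert (A := HN n Hn).
  replace (INR n * INR n * r ^ n)%R with ((INR n * s ^ n) * (INR n * s ^ n))%R.
  2: { rewrite Hrs. rewrite Rpow_mult_distr. ring. }
  assert (0 <= INR n * s ^ n)%R. { apply Rmult_le_pos. apply pos_INR. apply pow_le. lra. }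
  assert (B1 := Rmin_l 1 eps). assert (B2 := Rmin_r 1 eps). nra. Qed.

Lemma pow_le1 r n : (0 <= r <= 1)%R -> (r ^ n <= 1)%R.
Proof. intros H. induction n; simpl. lra. assert (0 <= r ^ n) by (apply pow_le; lra). nra. Qed.

Fixpoint rprod (r : R) (m : nat) : R :=
  match m with O => 1%R | S k => (rprod r k * (1 + r ^ k))%R end.

Lemma rprod_ge1 r m : (0 <= r)%R -> (1 <= rprod r m)%R.
Proof. intros Hr. induction m; simpl. lra. assert (0 <= r ^ m)%R by (apply pow_le; auto). nra. Qed.

Definition Kb (r : R) : R := exp (/ (1 - r)).

Lemma rprod_Kb r m : (0 <= r < 1)%R -> (rprod r m <= Kb r)%R.
Proof. intros Hr. unfold Kb.
  assert (forall m, rprod r m <= exp ((1 - r ^ m) / (1 - r)))%R.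
  { induction m0; simpl. replace ((1 - 1) / (1 - r))%R with 0%R by (field; lra). rewrite exp_0. lra.
    replace ((1 - r * r ^ m0) / (1 - r))%R with ((1 - r ^ m0) / (1 - r) + r ^ m0)%R by (field; lra).
    rewrite exp_plus. apply Rmult_le_compat. generalize (rprod_ge1 r m0); lra.
    assert (0 <= r ^ m0)%R by (apply pow_le; lra). lra. auto. apply exp_ineq1_le. }
  eapply Rle_trans. apply H.
  assert (0 <= r ^ m)%R by (apply pow_le; lra).
  assert (Hle : ((1 - r ^ m) / (1 - r) <= / (1 - r))%R).
  { unfold Rdiv. rewrite <- (Rmult_1_l (/ (1 - r))) at 2. apply Rmult_le_compat_r.
    apply Rlt_le. apply Rinv_0_lt_compat. lra. lra. }
  destruct (Rle_lt_or_eq_dec _ _ Hle) as [Hlt|Heq]. apply Rlt_le, exp_increasing, Hlt. rewrite Heq; lra. Qed.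

Lemma Kb_ge1 r : (0 <= r < 1)%R -> (1 <= Kb r)%R.
Proof. intros. eapply Rle_trans. apply (rprod_ge1 r 0). lra. apply rprod_Kb. auto. Qed.

Open Scope C_scope.
Lemma Cmod_1m_le x : (Cmod (1 - x) <= 1 + Cmod x)%R.
Proof. eapply Rle_trans. unfold Cminus. apply Cmod_triangle. rewrite Cmod_opp, Cmod_1. lra. Qed.

Lemma Cmod_1m_ge x : (1 - Cmod x <= Cmod (1 - x))%R.
Proof. assert (A := Cmod_triangle (1 - x) x). replace (1 - x + x) with (RtoC 1) in A by ring.
  rewrite Cmod_1 in A. lra. Qed.

Lemma Cmod_aq a q n : Cmod (a * Cpow q n) = (Cmod a * Cmod q ^ n)%R.
Proof. rewrite Cmod_mult, Cmod_pow. auto. Qed.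

Lemma qpoch_split a q m n : qpoch a q (m + n) = qpoch a q m * qpoch (a * Cpow q m) q n.
Proof. induction n; simpl. rewrite Nat.add_0_r. ring.
  rewrite Nat.add_succ_r. simpl. rewrite IHn. rewrite Cpow_add_r. ring. Qed.

Lemma qpoch_upper a q n : (Cmod a <= 1)%R -> (Cmod q < 1)%R ->
  (Cmod (qpoch a q n) <= rprod (Cmod q) n)%R.
Proof. intros Ha Hq. induction n; simpl. rewrite Cmod_1. lra.
  rewrite Cmod_mult. apply Rmult_le_compat. apply Cmod_ge_0. apply Cmod_ge_0. auto.
  eapply Rle_trans. apply Cmod_1m_le. rewrite Cmod_aq.
  assert (0 <= Cmod q ^ n)%R by (apply pow_le; apply Cmod_ge_0). 
  assert (0 <= Cmod a)%R by apply Cmod_ge_0. nra. Qed.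

Lemma qpoch_upper_Kb a q n : (Cmod a <= 1)%R -> (Cmod q < 1)%R ->
  (Cmod (qpoch a q n) <= Kb (Cmod q))%R.
Proof. intros. eapply Rle_trans. apply qpoch_upper; auto. apply rprod_Kb.
  split. apply Cmod_ge_0. auto. Qed.

Lemma qpoch_weier b q n : (Cmod q < 1)%R ->
  (1 - Cmod b * (1 - Cmod q ^ n) / (1 - Cmod q) <= Cmod (qpoch b q n))%R.
Proof. intros Hq. set (r := Cmod q). assert (Hr : (0 <= r)%R) by apply Cmod_ge_0.
  assert (Hr1 : (r < 1)%R) by (unfold r; lra).
  assert (Hb : (0 <= Cmod b)%R) by apply Cmod_ge_0.
  induction n; simpl. rewrite Cmod_1. replace (1 - Cmod b * (1 - 1) / (1 - r))%R with 1%R by (field; unfold r; lra). lra.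
  rewrite Cmod_mult. assert (A := Cmod_1m_ge (b * Cpow q n)). rewrite Cmod_aq in A. fold r in A.
  set (X := (1 - Cmod b * (1 - r ^ n) / (1 - r))%R) in *.
  replace (1 - Cmod b * (1 - r * r ^ n) / (1 - r))%R with (X - Cmod b * r ^ n)%R by (unfold X; field; unfold r; lra).
  assert (0 <= r ^ n)%R by (apply pow_le; auto).
  assert (X <= 1)%R. { unfold X. assert (r ^ n <= 1)%R. apply pow_le1; lra.
    assert (0 <= Cmod b * (1 - r ^ n) / (1 - r))%R. apply Rdiv_le_0_compat. apply Rmult_le_pos; lra. unfold r; lra. lra. }
  assert (P1 := Cmod_ge_0 (qpoch b q n)). assert (P2 := Cmod_ge_0 (1 - b * Cpow q n)).
  assert (0 <= Cmod b * r ^ n)%R by (apply Rmult_le_pos; lra).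
  destruct (Rle_lt_dec 0 (1 - Cmod b * r ^ n)).
  - destruct (Rle_lt_dec 0 X).
    + apply Rle_trans with (X * (1 - Cmod b * r ^ n))%R. nra.
      apply Rmult_le_compat; auto.
    + nra.
  - nra. Qed.

Lemma qpoch_nz a q n : (forall i, 1 - a * Cpow q i <> 0) -> qpoch a q n <> 0.
Proof. intros H. induction n; simpl. intros E. injection E. lra.
  apply Cmult_neq_0; auto. Qed.

Lemma qp_lower a q : (Cmod a <= 1)%R -> (Cmod q < 1)%R -> (forall i, 1 - a * Cpow q i <> 0) ->
  exists c, (0 < c)%R /\ forall n, (c <= Cmod (qpoch a q n))%R.
Proof. intros Ha Hq Hnz. set (r := Cmod q). assert (Hr : (0 <= r < 1)%R) by (split; [apply Cmod_ge_0|auto]).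
  destruct (pow_lt_1_zero r ltac:(rewrite Rabs_pos_eq; lra) ((1 - r) / 2)%R ltac:(lra)) as [K HK].
  assert (HrK : (r ^ K < (1 - r) / 2)%R). { assert (A := HK K (le_n _)). rewrite Rabs_pos_eq in A. auto. apply pow_le; lra. }
  assert (HPK : (0 < Cmod (qpoch a q K))%R).
  { assert (A := qpoch_nz a q K Hnz). assert (B := Cmod_ge_0 (qpoch a q K)).
    destruct B; auto. exfalso. apply A. apply Cmod_eq_0. auto. }
  assert (HKb := Kb_ge1 r Hr).
  exists (Cmod (qpoch a q K) / (2 * Kb r))%R. split. apply Rdiv_lt_0_compat; lra.
  intros n. destruct (Nat.le_gt_cases K n).
  - replace n with (K + (n - K))%nat by lia. rewrite qpoch_split. rewrite Cmod_mult.
    assert (W := qpoch_weier (a * Cpow q K) q (n - K) Hq). rewrite Cmod_aq in W. fold r in W.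
    assert (0 <= r ^ (n - K))%R by (apply pow_le; lra).
    assert (r ^ (n - K) <= 1)%R by (apply pow_le1; lra).
    assert (Cmod a * r ^ K <= (1 - r) / 2)%R. { assert (0 <= r ^ K)%R by (apply pow_le; lra).
      assert (0 <= Cmod a)%R by apply Cmod_ge_0. nra. }
    assert (1 / 2 <= Cmod (qpoch (a * Cpow q K) q (n - K)))%R.
    { eapply Rle_trans. 2: apply W. 
      assert (Cmod a * r ^ K * (1 - r ^ (n - K)) / (1 - r) <= 1 / 2)%R.
      { apply Rmult_le_reg_r with (1 - r)%R. lra. unfold Rdiv. rewrite Rmult_assoc, Rinv_l by lra.
        assert (0 <= Cmod a * r ^ K)%R. { apply Rmult_le_pos. apply Cmod_ge_0. apply pow_le; lra. } nra. }
      lra. }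
    apply Rle_trans with (Cmod (qpoch a q K) * (1 / 2))%R.
    + unfold Rdiv. rewrite Rinv_mult. assert (0 < / Kb r <= 1)%R. { split. apply Rinv_0_lt_compat. lra.
        rewrite <- Rinv_1. apply Rinv_le_contravar; lra. } nra.
    + apply Rmult_le_compat_l; lra.
  - assert (E : qpoch a q K = qpoch a q n * qpoch (a * Cpow q n) q (K - n)).
    { rewrite <- qpoch_split. f_equal. lia. }
    assert (U := qpoch_upper_Kb (a * Cpow q n) q (K - n)). rewrite Cmod_aq in U. fold r in U.
    assert (Cmod a * r ^ n <= 1)%R. { assert (r ^ n <= 1)%R by (apply pow_le1; lra).
      assert (0 <= r ^ n)%R by (apply pow_le; lra). assert (0 <= Cmod a)%R by apply Cmod_ge_0. nra. }
    specialize (U H0 Hq).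
    assert (Cmod (qpoch a q K) <= Cmod (qpoch a q n) * Kb r)%R.
    { rewrite E, Cmod_mult. apply Rmult_le_compat_l. apply Cmod_ge_0. auto. }
    apply Rmult_le_reg_r with (2 * Kb r)%R. lra. unfold Rdiv. rewrite Rmult_assoc, Rinv_l by lra.
    assert (0 <= Cmod (qpoch a q n))%R by apply Cmod_ge_0. nra. Qed.

Lemma geo_cv u M r : (0 <= r < 1)%R -> (forall n, (Cmod (u (S n) - u n) <= M * r ^ n)%R) ->
  cv u (Clim u).
Proof. intros Hr H. apply cauchy_Clim.
  assert (HM : (0 <= M)%R). { assert (A := H 0%nat). simpl in A. generalize (Cmod_ge_0 (u 1%nat - u 0%nat)). lra. }
  assert (T : forall N k, (Cmod (u (N + k)%nat - u N) <= M * (r ^ N - r ^ (N + k)) / (1 - r))%R).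
  { intros N k. induction k. rewrite Nat.add_0_r. replace (u N - u N) with (RtoC 0) by ring.
    rewrite Cmod_0. unfold Rdiv. replace (r ^ N - r ^ N)%R with 0%R by ring. rewrite Rmult_0_r, Rmult_0_l. lra.
    replace (u (N + S k)%nat - u N) with ((u (S (N + k)) - u (N + k)%nat) + (u (N + k)%nat - u N)).
    2: { rewrite Nat.add_succ_r. ring. }
    eapply Rle_trans. apply Cmod_triangle. assert (A := H (N + k)%nat).
    replace (M * (r ^ N - r ^ (N + S k)) / (1 - r))%R with (M * r ^ (N + k) + M * (r ^ N - r ^ (N + k)) / (1 - r))%R.
    lra. rewrite Nat.add_succ_r. simpl. field. lra. }
  intros eps He.
  destruct (pow_lt_1_zero r ltac:(rewrite Rabs_pos_eq; lra) (eps * (1 - r) / (M + 1))%R) as [N HN].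
  { apply Rdiv_lt_0_compat. apply Rmult_lt_0_compat; lra. lra. }
  exists N. intros n Hn. replace n with (N + (n - N))%nat by lia.
  eapply Rle_lt_trans. apply T.
  assert (A := HN N (le_n _)). rewrite Rabs_pos_eq in A by (apply pow_le; lra).
  assert (0 <= r ^ (N + (n - N)))%R by (apply pow_le; lra).
  apply Rle_lt_trans with (M * r ^ N / (1 - r))%R.
  { unfold Rdiv. apply Rmult_le_compat_r. apply Rlt_le, Rinv_0_lt_compat. lra. nra. }
  apply Rmult_lt_reg_r with (1 - r)%R. lra. unfold Rdiv. rewrite Rmult_assoc, Rinv_l by lra.
  rewrite Rmult_1_r. apply Rle_lt_trans with ((M + 1) * r ^ N)%R.
  assert (0 <= r ^ N)%R by (apply pow_le; lra). nra.
  replace (eps * (1 - r))%R with ((M + 1) * (eps * (1 - r) / (M + 1)))%R by (field; lra).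
  apply Rmult_lt_compat_l; lra. Qed.

Lemma qp_conv a q : (Cmod a <= 1)%R -> (Cmod q < 1)%R -> cv (qpoch a q) (qpoch_inf a q).
Proof. intros Ha Hq. unfold qpoch_inf. apply geo_cv with (Kb (Cmod q) * Cmod a)%R (Cmod q).
  split. apply Cmod_ge_0. auto.
  intros n. simpl. replace (qpoch a q n * (1 - a * Cpow q n) - qpoch a q n) with (- (qpoch a q n * (a * Cpow q n))) by ring.
  rewrite Cmod_opp, Cmod_mult, Cmod_aq. assert (A := qpoch_upper_Kb a q n Ha Hq).
  assert (0 <= Cmod a * Cmod q ^ n)%R. { apply Rmult_le_pos. apply Cmod_ge_0. apply pow_le, Cmod_ge_0. }
  rewrite Rmult_assoc. apply Rmult_le_compat_r; auto. Qed.

Lemma qpinf_nz a q : (Cmod a <= 1)%R -> (Cmod q < 1)%R -> (forall i, 1 - a * Cpow q i <> 0) ->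
  exists c, (0 < c)%R /\ (forall n, (c <= Cmod (qpoch a q n))%R) /\ (c <= Cmod (qpoch_inf a q))%R.
Proof. intros Ha Hq Hnz. destruct (qp_lower a q Ha Hq Hnz) as [c [Hc Hn]]. exists c. split; auto. split; auto.
  apply cv_lower with (qpoch a q). apply qp_conv; auto. auto. Qed.

Open Scope C_scope.

Lemma null_S e : null e -> null (fun n => e (S n)).
Proof. intros H eps He. destruct (H eps He) as [N HN]. exists N. intros. apply HN. lia. Qed.

Lemma one_minus_nz x : (Cmod x < 1)%R -> 1 - x <> 0.
Proof. intros H E. assert (x = 1). { replace x with (1 - (1 - x)) by ring. rewrite E. ring. }
  subst. rewrite Cmod_1 in H. lra. Qed.

Lemma Cpow0_S n : Cpow 0 (S n) = 0.
Proof. simpl. ring. Qed.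

Lemma aux_nn (a b : R) : (1 <= a)%R -> (0 <= b)%R -> (a * b <= a * a * b)%R.
Proof. intros. apply Rmult_le_compat_r; auto. nra. Qed.

Fixpoint Vs (q w : C) (n : nat) : C :=
  match n with O => 1 | S m => (1 - Cpow q m) * Vs q w m + Cpow w m end.

Lemma V_FE q w n : (1 - w) * Vs q w (S n) = Vs q (w * q) (S n) - Cpow w (S n).
Proof. induction n.
  - simpl. ring.
  - change (Vs q w (S (S n))) with ((1 - Cpow q (S n)) * Vs q w (S n) + Cpow w (S n)).
    change (Vs q (w * q) (S (S n))) with ((1 - Cpow q (S n)) * Vs q (w * q) (S n) + Cpow (w * q) (S n)).
    rewrite Cpow_mult_l.
    replace ((1 - w) * ((1 - Cpow q (S n)) * Vs q w (S n) + Cpow w (S n))) with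
      ((1 - Cpow q (S n)) * ((1 - w) * Vs q w (S n)) + (1 - w) * Cpow w (S n)) by ring.
    rewrite IHn. change (Cpow w (S (S n))) with (w * Cpow w (S n)). ring. Qed.

Fixpoint Rs (q w : C) (n m : nat) : C :=
  match m with O => 0 | S k => Cpow (w * Cpow q k) n + (1 - w * Cpow q k) * Rs q w n k end.

Lemma V_iter q w n m : qpoch w q m * Vs q w (S n) = Vs q (w * Cpow q m) (S n) - Rs q w (S n) m.
Proof. induction m.
  - simpl. rewrite Cmult_1_r. ring.
  - change (qpoch w q (S m)) with (qpoch w q m * (1 - w * Cpow q m)).
    change (Rs q w (S n) (S m)) with (Cpow (w * Cpow q m) (S n) + (1 - w * Cpow q m) * Rs q w (S n) m).
    replace (qpoch w q m * (1 - w * Cpow q m) * Vs q w (S n)) with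
       ((1 - w * Cpow q m) * (qpoch w q m * Vs q w (S n))) by ring.
    rewrite IHm. 
    replace ((1 - w * Cpow q m) * (Vs q (w * Cpow q m) (S n) - Rs q w (S n) m)) with
      ((1 - w * Cpow q m) * Vs q (w * Cpow q m) (S n) - (1 - w * Cpow q m) * Rs q w (S n) m) by ring.
    rewrite V_FE. replace (w * Cpow q m * q) with (w * Cpow q (S m)) by (simpl; ring). ring. Qed.

Lemma Rs_bound q w n m : (Cmod q < 1)%R -> (Cmod w <= 1)%R ->
  (Cmod (Rs q w n m) <= INR m * rprod (Cmod q) m * Cmod w ^ n)%R.
Proof. intros Hq Hw. set (r := Cmod q). assert (Hr : (0 <= r < 1)%R) by (split; [apply Cmod_ge_0|auto]).
  assert (Hw0 : (0 <= Cmod w)%R) by apply Cmod_ge_0.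
  induction m.
  - simpl. rewrite Cmod_0. lra.
  - cbn [Rs rprod]. eapply Rle_trans. apply Cmod_triangle. rewrite Cmod_mult, Cmod_pow, Cmod_aq. fold r.
    assert (H1 : ((Cmod w * r ^ m) ^ n <= Cmod w ^ n)%R).
    { rewrite Rpow_mult_distr. assert (0 <= Cmod w ^ n)%R by (apply pow_le; lra).
      assert ((r ^ m) ^ n <= 1)%R. { apply pow_le1. split. apply pow_le; lra. apply pow_le1; lra. }
      assert (0 <= (r ^ m) ^ n)%R by (apply pow_le, pow_le; lra). nra. }
    assert (H2 : (Cmod (1 - w * Cpow q m) <= 1 + r ^ m)%R).
    { eapply Rle_trans. apply Cmod_1m_le. rewrite Cmod_aq. fold r. assert (0 <= r ^ m)%R by (apply pow_le; lra). nra. }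
    assert (G := rprod_ge1 r m (proj1 Hr)). assert (0 <= r ^ m)%R by (apply pow_le; lra).
    assert (0 <= Cmod w ^ n)%R by (apply pow_le; lra). assert (Pm := pos_INR m).
    assert (0 <= Cmod (Rs q w n m))%R by apply Cmod_ge_0.
    rewrite S_INR.
    apply Rle_trans with (Cmod w ^ n + (1 + r ^ m) * (INR m * rprod r m * Cmod w ^ n))%R.
    + apply Rplus_le_compat. auto. apply Rmult_le_compat; auto. apply Cmod_ge_0.
    + assert (0 <= INR m * rprod r m * Cmod w ^ n)%R. { apply Rmult_le_pos; auto. apply Rmult_le_pos; lra. }
      assert (0 <= rprod r m * (1 + r^m) * Cmod w ^ n - Cmod w ^ n)%R.
      { assert (1 <= rprod r m * (1 + r ^ m))%R by nra. nra. }
      nra. Qed.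

Lemma V0_S q n : Vs q 0 (S n) = qpoch q q n.
Proof. induction n. simpl. ring.
  change (Vs q 0 (S (S n))) with ((1 - Cpow q (S n)) * Vs q 0 (S n) + Cpow 0 (S n)).
  rewrite IHn, Cpow0_S. simpl. ring. Qed.

Lemma V_diff0 q u n : (Cmod q < 1)%R -> (Cmod u <= 1)%R ->
  (Cmod (Vs q u n - Vs q 0 n) <= INR n * rprod (Cmod q) n * Cmod u)%R.
Proof. intros Hq Hu. set (r := Cmod q). assert (Hr : (0 <= r < 1)%R) by (split; [apply Cmod_ge_0|auto]).
  assert (Hu0 : (0 <= Cmod u)%R) by apply Cmod_ge_0.
  induction n.
  - simpl. replace (1 - 1) with (RtoC 0) by ring. rewrite Cmod_0. lra.
  - cbn [Vs rprod].
    replace ((1 - Cpow q n) * Vs q u n + Cpow u n - ((1 - Cpow q n) * Vs q 0 n + Cpow 0 n)) with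
      ((1 - Cpow q n) * (Vs q u n - Vs q 0 n) + (Cpow u n - Cpow 0 n)) by ring.
    eapply Rle_trans. apply Cmod_triangle. rewrite Cmod_mult.
    assert (H1 : (Cmod (Cpow u n - Cpow 0 n) <= Cmod u)%R).
    { destruct n. simpl. replace (1 - 1) with (RtoC 0) by ring. rewrite Cmod_0. lra.
      rewrite Cpow0_S. replace (Cpow u (S n) - 0) with (Cpow u (S n)) by ring. rewrite Cmod_pow.
      simpl. assert (Cmod u ^ n <= 1)%R by (apply pow_le1; lra). nra. }
    assert (H2 : (Cmod (1 - Cpow q n) <= 1 + r ^ n)%R).
    { eapply Rle_trans. apply Cmod_1m_le. rewrite Cmod_pow. fold r. lra. }
    assert (G := rprod_ge1 r n (proj1 Hr)). assert (0 <= r ^ n)%R by (apply pow_le; lra).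
    assert (Pm := pos_INR n). rewrite S_INR.
    apply Rle_trans with ((1 + r ^ n) * (INR n * rprod r n * Cmod u) + Cmod u)%R.
    + apply Rplus_le_compat; auto. apply Rmult_le_compat; auto; apply Cmod_ge_0.
    + assert (0 <= INR n * rprod r n * Cmod u)%R. { apply Rmult_le_pos; auto. apply Rmult_le_pos; lra. }
      assert (1 <= rprod r n * (1 + r ^ n))%R by nra.
      assert (0 <= (rprod r n * (1 + r ^ n) - 1) * Cmod u)%R by nra.
      nra. Qed.

Lemma qpinf_shift z q : (Cmod z <= 1)%R -> (Cmod q < 1)%R ->
  qpoch_inf z q = (1 - z) * qpoch_inf (z * q) q.
Proof. intros Hz Hq. assert (Hzq : (Cmod (z * q) <= 1)%R).
  { rewrite Cmod_mult. assert (0 <= Cmod z)%R by apply Cmod_ge_0. assert (0 <= Cmod q)%R by apply Cmod_ge_0. nra. }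
  apply (cv_unique (fun n => qpoch z q (S n))). apply cv_S. apply qp_conv; auto.
  apply cv_ext with (fun n => (1 - z) * qpoch (z * q) q n).
  - intros n. change (S n) with (1 + n)%nat. rewrite qpoch_split, Cpow_1_r. cbn [qpoch Cpow]. ring.
  - apply cv_scal. apply qp_conv; auto. Qed.

Lemma V_lim q w : (Cmod q < 1)%R -> (Cmod w <= Cmod q)%R ->
  cv (Vs q w) (qpoch_inf q q / qpoch_inf w q).
Proof. intros Hq Hw. set (r := Cmod q). assert (Hr : (0 <= r < 1)%R) by (split; [apply Cmod_ge_0|auto]).
  assert (Hw1 : (Cmod w <= 1)%R) by (unfold r in *; lra).
  assert (Hw0 : (0 <= Cmod w)%R) by apply Cmod_ge_0.
  assert (Hnz : forall i, 1 - w * Cpow q i <> 0).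
  { intros i. apply one_minus_nz. rewrite Cmod_aq. fold r. assert (r ^ i <= 1)%R by (apply pow_le1; lra).
    assert (0 <= r ^ i)%R by (apply pow_le; lra). nra. }
  destruct (qpinf_nz w q Hw1 Hq Hnz) as [c [Hc [Hcn Hci]]].
  assert (HQw : qpoch_inf w q <> 0). { intros E. rewrite E, Cmod_0 in Hci. lra. }
  apply cv_S_inv.
  apply cv_ext with (fun n => (qpoch w q (S n) * Vs q w (S n)) / qpoch w q (S n)).
  { intros n. field. intros E. assert (A := Hcn (S n)). rewrite E, Cmod_0 in A. lra. }
  apply cv_div with c; auto. 2: { apply cv_S. apply qp_conv; auto. }
  assert (Hq1 : (Cmod q <= 1)%R) by lra.
  apply cv_ext with (fun n => qpoch q q n + ((qpoch w q (S n) * Vs q w (S n)) - Vs q 0 (S n))).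
  { intros n. rewrite V0_S. ring. }
  replace (qpoch_inf q q) with (qpoch_inf q q + 0) by ring.
  apply cv_plus. apply qp_conv; auto.
  apply cv_null with (fun n => 2 * Kb r * (INR (S n) * INR (S n) * r ^ (S n)))%R.
  { apply null_scal. apply (null_S (fun n => INR n * INR n * r ^ n)%R). apply null_n2pow. auto. assert (A := Kb_ge1 r Hr). lra. }
  exists 0%nat. intros n _. rewrite V_iter.
  replace (Vs q (w * Cpow q (S n)) (S n) - Rs q w (S n) (S n) - Vs q 0 (S n) - 0) with
    ((Vs q (w * Cpow q (S n)) (S n) - Vs q 0 (S n)) - Rs q w (S n) (S n)) by ring.
  unfold Cminus at 1. eapply Rle_trans. apply Cmod_triangle. rewrite Cmod_opp.
  assert (Hu : (Cmod (w * Cpow q (S n)) <= r ^ S n)%R).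
  { rewrite Cmod_aq. fold r. assert (0 <= r ^ S n)%R by (apply pow_le; lra). nra. }
  assert (Hu1 : (Cmod (w * Cpow q (S n)) <= 1)%R). { eapply Rle_trans. apply Hu. apply pow_le1; lra. }
  assert (D := V_diff0 q (w * Cpow q (S n)) (S n) Hq Hu1). fold r in D.
  assert (R := Rs_bound q w (S n) (S n) Hq Hw1). fold r in R.
  assert (KB := Kb_ge1 r Hr). assert (K := rprod_Kb r (S n) Hr). assert (G := rprod_ge1 r (S n) (proj1 Hr)).
  assert (P := pos_INR (S n)). assert (1 <= INR (S n))%R. { rewrite S_INR. generalize (pos_INR n). lra. }
  assert (Hwn : (Cmod w ^ S n <= r ^ S n)%R). { apply pow_incr. unfold r. lra. }
  assert (0 <= r ^ S n)%R by (apply pow_le; lra).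
  assert (E1 : (INR (S n) * rprod r (S n) * Cmod (w * Cpow q (S n)) <= Kb r * (INR (S n) * INR (S n) * r ^ S n))%R).
  { apply Rle_trans with (INR (S n) * Kb r * r ^ S n)%R.
    apply Rmult_le_compat. apply Rmult_le_pos; lra. apply Cmod_ge_0. apply Rmult_le_compat_l; lra. auto.
    assert (0 <= Kb r * r ^ S n)%R. apply Rmult_le_pos; lra.
    assert (Z := aux_nn (INR (S n)) (Kb r * r ^ S n) ltac:(auto) ltac:(auto)). 
    replace (INR (S n) * Kb r * r ^ S n)%R with (INR (S n) * (Kb r * r ^ S n))%R by ring.
    replace (Kb r * (INR (S n) * INR (S n) * r ^ S n))%R with (INR (S n) * INR (S n) * (Kb r * r ^ S n))%R by ring.
    auto. }
  assert (E2 : (INR (S n) * rprod r (S n) * Cmod w ^ S n <= Kb r * (INR (S n) * INR (S n) * r ^ S n))%R).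
  { apply Rle_trans with (INR (S n) * Kb r * r ^ S n)%R.
    apply Rmult_le_compat. apply Rmult_le_pos; lra. apply pow_le; lra. apply Rmult_le_compat_l; lra. auto.
    assert (0 <= Kb r * r ^ S n)%R. apply Rmult_le_pos; lra.
    assert (Z := aux_nn (INR (S n)) (Kb r * r ^ S n) ltac:(auto) ltac:(auto)). 
    replace (INR (S n) * Kb r * r ^ S n)%R with (INR (S n) * (Kb r * r ^ S n))%R by ring.
    replace (Kb r * (INR (S n) * INR (S n) * r ^ S n))%R with (INR (S n) * INR (S n) * (Kb r * r ^ S n))%R by ring.
    auto. }
  lra. Qed.

Open Scope C_scope.

Lemma pow_anti (r : R) a b : (0 <= r <= 1)%R -> (a <= b)%nat -> (r ^ b <= r ^ a)%R.
Proof. intros Hr Hab. replace b with (a + (b - a))%nat by lia. rewrite pow_add.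
  assert (0 <= r ^ a)%R by (apply pow_le; lra). assert (r ^ (b - a) <= 1)%R by (apply pow_le1; lra).
  assert (0 <= r ^ (b - a))%R by (apply pow_le; lra). nra. Qed.

Lemma aseq_ext f g q n : (forall j, (1 <= j)%nat -> f j = g j) -> aseq f q n = aseq g q n.
Proof. intros H. induction n; simpl. auto. rewrite IHn, H by lia. auto. Qed.

Lemma aseq_geo z q n : (1 - z) * aseq (fun j => Cpow z (j - 1)) q n = Vs q (z * q) n - Cpow z n.
Proof. induction n. simpl. ring.
  cbn [aseq Vs]. replace (S n - 1)%nat with n by lia.
  replace ((1 - z) * (Cpow z n + (1 - Cpow q n) * aseq (fun j : nat => Cpow z (j - 1)) q n)) with
    ((1 - z) * Cpow z n + (1 - Cpow q n) * ((1 - z) * aseq (fun j : nat => Cpow z (j - 1)) q n)) by ring.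
  rewrite IHn. rewrite Cpow_mult_l. simpl. ring. Qed.

Lemma Csum_geo z n : (1 - z) * Csum (fun j => Cpow z (j - 1)) 1 n = 1 - Cpow z n.
Proof. rewrite Csum_sumC. induction n. simpl. ring.
  cbn [sumC]. replace (S n - 1)%nat with n by lia.
  replace ((1 - z) * (sumC (fun i : nat => Cpow z (S i - 1)) n + Cpow z n)) with
   ((1 - z) * sumC (fun i : nat => Cpow z (S i - 1)) n + (1 - z) * Cpow z n) by ring.
  rewrite IHn. simpl. ring. Qed.

Lemma Cmod_zq z q : (Cmod z <= 1)%R -> (Cmod (z * q) <= Cmod q)%R.
Proof. intros. rewrite Cmod_mult. assert (0 <= Cmod q)%R by apply Cmod_ge_0. nra. Qed.

Lemma partD q z : (Cmod q < 1)%R -> (Cmod z <= 1)%R -> z <> 1 ->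
  cv (fun n => Csum (fun j => Cpow z (j - 1)) 1 n - aseq (fun j => Cpow z (j - 1)) q n)
     (/ (1 - z) - qpoch_inf q q / qpoch_inf z q).
Proof. intros Hq Hz Hz1. set (r := Cmod q).
  assert (Hz1' : 1 - z <> 0). { intros E. apply Hz1. replace z with (1 - (1 - z)) by ring. rewrite E. ring. }
  assert (Hzq : (Cmod (z * q) <= Cmod q)%R) by (apply Cmod_zq; auto).
  assert (Hzq1 : (Cmod (z * q) <= 1)%R) by lra.
  assert (Hnz : forall i, 1 - z * q * Cpow q i <> 0).
  { intros i. apply one_minus_nz. rewrite Cmod_aq. assert (Cmod q ^ i <= 1)%R by (apply pow_le1; split; [apply Cmod_ge_0|lra]).
    assert (0 <= Cmod q ^ i)%R by (apply pow_le; apply Cmod_ge_0).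
    assert (0 <= Cmod (z * q))%R by apply Cmod_ge_0. nra. }
  destruct (qpinf_nz (z * q) q Hzq1 Hq Hnz) as [c [Hc [_ Hci]]].
  assert (HQ : qpoch_inf (z * q) q <> 0). { intros E. rewrite E, Cmod_0 in Hci. lra. }
  rewrite (qpinf_shift z q Hz Hq).
  replace (/ (1 - z) - qpoch_inf q q / ((1 - z) * qpoch_inf (z * q) q)) with
    (/ (1 - z) * (1 - qpoch_inf q q / qpoch_inf (z * q) q)) by (field; auto).
  apply cv_ext with (fun n => / (1 - z) * (1 - Vs q (z * q) n)).
  { intros n. assert (A := aseq_geo z q n). assert (B := Csum_geo z n).
    replace (1 - Vs q (z * q) n) with ((1 - z) * Csum (fun j => Cpow z (j - 1)) 1 n - (1 - z) * aseq (fun j => Cpow z (j - 1)) q n)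
      by (rewrite A, B; ring).
    field. auto. }
  apply cv_scal. apply cv_minus. apply cv_const. apply V_lim; auto. Qed.

Fixpoint Ys (q w : C) (n : nat) : C :=
  match n with O => 0 | S m => (1 - Cpow q m) * Ys q w m + RtoC (INR m) * Cpow w m end.

Lemma RtoC_S n : RtoC (INR (S n)) = RtoC (INR n) + 1.
Proof. rewrite S_INR, <- RtoC_plus. auto. Qed.

Lemma partE_Y q n : Csum (fun _ => 1) 1 n - aseq (fun _ => 1) q n = Ys q q n.
Proof. rewrite Csum_sumC.
  assert (forall n, sumC (fun _ => 1) n = RtoC (INR n)).
  { induction n0. simpl. auto. cbn [sumC]. rewrite IHn0, RtoC_S. auto. }
  rewrite H. induction n. simpl. ring.
  cbn [aseq Ys]. rewrite RtoC_S.
  assert (E : aseq (fun _ => 1) q n = RtoC (INR n) - Ys q q n) by (rewrite <- IHn; ring).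
  rewrite E. ring. Qed.

Lemma Y_FE q w n : (1 - w) * Ys q w (S n) = Ys q (w * q) (S n) + w * Vs q w (S n) - RtoC (INR (S n)) * Cpow w (S n).
Proof. induction n.
  - simpl. ring.
  - change (Ys q w (S (S n))) with ((1 - Cpow q (S n)) * Ys q w (S n) + RtoC (INR (S n)) * Cpow w (S n)).
    change (Ys q (w * q) (S (S n))) with ((1 - Cpow q (S n)) * Ys q (w * q) (S n) + RtoC (INR (S n)) * Cpow (w * q) (S n)).
    change (Vs q w (S (S n))) with ((1 - Cpow q (S n)) * Vs q w (S n) + Cpow w (S n)).
    rewrite Cpow_mult_l.
    replace ((1 - w) * ((1 - Cpow q (S n)) * Ys q w (S n) + RtoC (INR (S n)) * Cpow w (S n))) with
      ((1 - Cpow q (S n)) * ((1 - w) * Ys q w (S n)) + (1 - w) * RtoC (INR (S n)) * Cpow w (S n)) by ring.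
    rewrite IHn. rewrite (RtoC_S (S n)). change (Cpow w (S (S n))) with (w * Cpow w (S n)). ring. Qed.

Lemma V_at_q q n : Vs q q n = 1.
Proof. induction n. auto. cbn [Vs]. rewrite IHn. ring. Qed.

Lemma V_qpow q n i : (Cmod q < 1)%R ->
  (Cmod (Vs q (Cpow q (S i)) (S n) - qpoch q q i) <= INR i * rprod (Cmod q) (S i) * Cmod q ^ (S n))%R.
Proof. intros Hq. set (r := Cmod q). assert (Hr : (0 <= r < 1)%R) by (split; [apply Cmod_ge_0|auto]).
  induction i.
  - replace (Cpow q 1) with q by (simpl; ring). rewrite V_at_q. simpl. replace (1 - 1) with (RtoC 0) by ring.
    rewrite Cmod_0. lra.
  - assert (FE := V_FE q (Cpow q (S i)) n).
    replace (Cpow q (S i) * q) with (Cpow q (S (S i))) in FE by (simpl; ring).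
    replace (Vs q (Cpow q (S (S i))) (S n) - qpoch q q (S i)) with
      ((1 - Cpow q (S i)) * (Vs q (Cpow q (S i)) (S n) - qpoch q q i) + Cpow (Cpow q (S i)) (S n)).
    2: { assert (E : Vs q (Cpow q (S (S i))) (S n) = (1 - Cpow q (S i)) * Vs q (Cpow q (S i)) (S n) + Cpow (Cpow q (S i)) (S n))
           by (rewrite FE; ring).
         rewrite E. change (qpoch q q (S i)) with (qpoch q q i * (1 - q * Cpow q i)).
         change (Cpow q (S i)) with (q * Cpow q i). ring. }
    eapply Rle_trans. apply Cmod_triangle. rewrite Cmod_mult, Cmod_pow, Cmod_pow. fold r.
    assert (H1 : (Cmod (1 - Cpow q (S i)) <= 1 + r ^ S i)%R).
    { eapply Rle_trans. apply Cmod_1m_le. rewrite Cmod_pow. fold r. lra. }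
    assert (H2 : ((r ^ S i) ^ S n <= r ^ S n)%R).
    { rewrite <- pow_mult. apply pow_anti. lra. nia. }
    assert (G := rprod_ge1 r (S i) (proj1 Hr)). assert (0 <= r ^ S i)%R by (apply pow_le; lra).
    assert (0 <= r ^ S n)%R by (apply pow_le; lra). assert (Pi := pos_INR i).
    change (rprod r (S (S i))) with (rprod r (S i) * (1 + r ^ S i))%R. rewrite (S_INR i).
    apply Rle_trans with ((1 + r ^ S i) * (INR i * rprod r (S i) * r ^ S n) + r ^ S n)%R.
    + apply Rplus_le_compat; auto. apply Rmult_le_compat; auto; apply Cmod_ge_0.
    + assert (0 <= INR i * rprod r (S i) * r ^ S n)%R. { apply Rmult_le_pos; auto. apply Rmult_le_pos; lra. }
      assert (1 <= rprod r (S i) * (1 + r ^ S i))%R by nra.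
      assert (0 <= (rprod r (S i) * (1 + r ^ S i) - 1) * r ^ S n)%R by nra.
      match goal with |- (?L <= ?R)%R => assert (EQ : (R - L = (rprod r (S i) * (1 + r ^ S i) - 1) * r ^ S n)%R) by ring end.
      lra. Qed.

Lemma Cmod_div_le x y c : (0 < c)%R -> (c <= Cmod y)%R -> (Cmod (x / y) <= Cmod x / c)%R.
Proof. intros Hc Hy. assert (Hy0 : y <> 0). { intros E. rewrite E, Cmod_0 in Hy. lra. }
  unfold Cdiv. rewrite Cmod_mult, Cmod_inv by auto. unfold Rdiv. apply Rmult_le_compat_l. apply Cmod_ge_0.
  apply Rinv_le_contravar; auto. Qed.

Lemma Y_bound q u m : (Cmod q < 1)%R -> (Cmod u <= 1)%R ->
  (Cmod (Ys q u m) <= INR m * INR m * rprod (Cmod q) m * Cmod u)%R.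
Proof. intros Hq Hu. set (r := Cmod q). assert (Hr : (0 <= r < 1)%R) by (split; [apply Cmod_ge_0|auto]).
  assert (Hu0 : (0 <= Cmod u)%R) by apply Cmod_ge_0.
  induction m.
  - simpl. rewrite Cmod_0. lra.
  - cbn [Ys]. change (rprod r (S m)) with (rprod r m * (1 + r ^ m))%R.
    eapply Rle_trans. apply Cmod_triangle. rewrite Cmod_mult, Cmod_mult, Cmod_R, Rabs_pos_eq by apply pos_INR.
    assert (H1 : (INR m * Cmod (Cpow u m) <= INR m * Cmod u)%R).
    { destruct m. simpl. lra. apply Rmult_le_compat_l. apply pos_INR. rewrite Cmod_pow. simpl.
      assert (Cmod u ^ m <= 1)%R by (apply pow_le1; lra). nra. }
    assert (H2 : (Cmod (1 - Cpow q m) <= 1 + r ^ m)%R).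
    { eapply Rle_trans. apply Cmod_1m_le. rewrite Cmod_pow. fold r. lra. }
    assert (G := rprod_ge1 r m (proj1 Hr)). assert (0 <= r ^ m)%R by (apply pow_le; lra).
    assert (Pm := pos_INR m). rewrite S_INR.
    apply Rle_trans with ((1 + r ^ m) * (INR m * INR m * rprod r m * Cmod u) + INR m * Cmod u)%R.
    + apply Rplus_le_compat; auto. apply Rmult_le_compat; auto; apply Cmod_ge_0.
    + set (X := (rprod r m * (1 + r ^ m))%R). assert (1 <= X)%R by (unfold X; nra).
      assert (0 <= INR m * INR m * X * Cmod u)%R. { apply Rmult_le_pos; auto. apply Rmult_le_pos; [nra|lra]. }
      assert (0 <= (2 * INR m + 1) * X * Cmod u - INR m * Cmod u)%R.
      { assert (0 <= (INR m + 1) * X * Cmod u)%R. { apply Rmult_le_pos; auto. apply Rmult_le_pos; lra. }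
        assert (0 <= INR m * (X - 1) * Cmod u)%R. { apply Rmult_le_pos; auto. apply Rmult_le_pos; lra. }
        match goal with |- (0 <= ?E)%R => assert (EQ : E = ((INR m + 1) * X * Cmod u + INR m * (X - 1) * Cmod u)%R) by ring end.
        lra. }
      match goal with |- (?L <= ?R)%R => assert (EQ : (R - L = (2 * INR m + 1) * X * Cmod u - INR m * Cmod u)%R) by (unfold X; ring) end.
      lra. Qed.

Lemma Y_tele q n m : (forall k, qpoch q q k <> 0) ->
  Ys q q (S n) = Ys q (Cpow q (S m)) (S n) / qpoch q q m +
    sumC (fun i => (Cpow q (S i) * Vs q (Cpow q (S i)) (S n) - RtoC (INR (S n)) * Cpow (Cpow q (S i)) (S n)) / qpoch q q (S i)) m.
Proof. intros Hnz. induction m.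
  - replace (Cpow q 1) with q by (simpl; ring). simpl. field.
  - rewrite IHm. cbn [sumC].
    set (w := Cpow q (S m)).
    assert (FE := Y_FE q w n). replace (w * q) with (Cpow q (S (S m))) in FE by (unfold w; simpl; ring).
    assert (E : Ys q (Cpow q (S (S m))) (S n) = (1 - w) * Ys q w (S n) - w * Vs q w (S n) + RtoC (INR (S n)) * Cpow w (S n))
      by (rewrite FE; ring).
    rewrite E. assert (EP : qpoch q q (S m) = qpoch q q m * (1 - w)) by (unfold w; simpl; ring).
    rewrite EP. assert (H1 := Hnz m). assert (H2 := Hnz (S m)). rewrite EP in H2.
    assert (H3 : 1 - w <> 0). { intros Z. apply H2. rewrite Z. ring. }
    field. auto. Qed.

Definition Lam q n := sumC (fun i => Cpow q (S i) / (1 - Cpow q (S i))) n.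

Lemma Lam_term_bound q i : (Cmod q < 1)%R ->
  (Cmod (Cpow q (S i) / (1 - Cpow q (S i))) <= Cmod q ^ S i / (1 - Cmod q))%R.
Proof. intros Hq. set (r := Cmod q). assert (Hr : (0 <= r < 1)%R) by (split; [apply Cmod_ge_0|auto]).
  assert (A : (1 - r <= Cmod (1 - Cpow q (S i)))%R).
  { eapply Rle_trans. 2: apply Cmod_1m_ge. rewrite Cmod_pow. fold r.
    assert (r ^ S i <= r ^ 1)%R by (apply pow_anti; [lra|lia]). rewrite pow_1 in H. lra. }
  eapply Rle_trans. apply (Cmod_div_le _ _ (1 - r)%R). lra. auto. rewrite Cmod_pow. fold r. lra. Qed.

Lemma Lam_cv q : (Cmod q < 1)%R -> cv (Lam q) (Clim (Lam q)).
Proof. intros Hq. set (r := Cmod q). assert (Hr : (0 <= r < 1)%R) by (split; [apply Cmod_ge_0|auto]).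
  apply geo_cv with (/ (1 - r))%R r. auto.
  intros n. unfold Lam. cbn [sumC].
  replace (sumC (fun i : nat => Cpow q (S i) / (1 - Cpow q (S i))) n + Cpow q (S n) / (1 - Cpow q (S n)) -
      sumC (fun i : nat => Cpow q (S i) / (1 - Cpow q (S i))) n) with (Cpow q (S n) / (1 - Cpow q (S n))) by ring.
  eapply Rle_trans. apply Lam_term_bound; auto. fold r.
  assert (r ^ S n <= r ^ n)%R by (apply pow_anti; [lra|lia]).
  unfold Rdiv. rewrite Rmult_comm. apply Rmult_le_compat_l. apply Rlt_le, Rinv_0_lt_compat. lra. auto. Qed.

Lemma partE q : (Cmod q < 1)%R -> cv (Ys q q) (Clim (Lam q)).
Proof. intros Hq. set (r := Cmod q). assert (Hr : (0 <= r < 1)%R) by (split; [apply Cmod_ge_0|auto]).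
  assert (Hq1 : (Cmod q <= 1)%R) by lra.
  assert (Hnzf : forall i, 1 - q * Cpow q i <> 0).
  { intros i. apply one_minus_nz. rewrite Cmod_aq. fold r. assert (r ^ i <= 1)%R by (apply pow_le1; lra).
    assert (0 <= r ^ i)%R by (apply pow_le; lra). nra. }
  destruct (qp_lower q q Hq1 Hq Hnzf) as [c [Hc Hcn]].
  assert (Hnz : forall k, qpoch q q k <> 0). { intros k E. assert (A := Hcn k). rewrite E, Cmod_0 in A. lra. }
  replace (Clim (Lam q)) with (0 + Clim (Lam q)) by ring.
  apply cv_ext with (fun n => (Ys q q n - Lam q n) + Lam q n). { intros; ring. }
  apply cv_plus. 2: apply Lam_cv; auto.
  apply cv_S_inv.
  assert (KB := Kb_ge1 r Hr).
  apply cv_null with (fun n => (2 * Kb r + 1) / c * (INR (S n) * INR (S n) * r ^ (S n)))%R.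
  { apply null_scal. apply (null_S (fun n => INR n * INR n * r ^ n)%R). apply null_n2pow. auto.
    apply Rlt_le, Rdiv_lt_0_compat; lra. }
  exists 0%nat. intros n _. 
  match goal with |- (Cmod ?X <= _)%R => replace X with (Ys q q (S n) - Lam q (S n)) by ring end.
  rewrite (Y_tele q n (S n) Hnz). unfold Lam.
  set (n' := S n) in *.
  assert (Pn := pos_INR n'). assert (Hn1 : (1 <= INR n')%R). { unfold n'. rewrite S_INR. generalize (pos_INR n). lra. }
  assert (Hrn : (0 <= r ^ n')%R) by (apply pow_le; lra).
  assert (T1 : (Cmod (Ys q (Cpow q (S n')) n' / qpoch q q n') <= Kb r * (INR n' * INR n' * r ^ n') / c)%R).
  { eapply Rle_trans. apply (Cmod_div_le _ _ c); auto. unfold Rdiv. apply Rmult_le_compat_r. apply Rlt_le, Rinv_0_lt_compat; auto.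
    assert (Hu : (Cmod (Cpow q (S n')) <= r ^ n')%R). { rewrite Cmod_pow. fold r. apply pow_anti; [lra|lia]. }
    assert (Hu1 : (Cmod (Cpow q (S n')) <= 1)%R). { eapply Rle_trans. apply Hu. apply pow_le1; lra. }
    eapply Rle_trans. apply Y_bound; auto. fold r.
    assert (K := rprod_Kb r n' Hr). assert (G := rprod_ge1 r n' (proj1 Hr)).
    assert (0 <= INR n' * INR n')%R by nra.
    apply Rle_trans with (INR n' * INR n' * Kb r * r ^ n')%R.
    apply Rmult_le_compat. apply Rmult_le_pos; lra. apply Cmod_ge_0. apply Rmult_le_compat_l; lra. auto.
    right. ring. }
  pose (F := fun i => (Cpow q (S i) * Vs q (Cpow q (S i)) n' - RtoC (INR n') * Cpow (Cpow q (S i)) n') / qpoch q q (S i)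
       - Cpow q (S i) / (1 - Cpow q (S i))).
  assert (T2 : (Cmod (sumC F n') <= INR n' * ((Kb r + 1) * (INR n' * r ^ n') / c))%R).
  { apply sumC_bound. intros i Hi. unfold F.
    assert (EP : qpoch q q (S i) = qpoch q q i * (1 - Cpow q (S i))) by (simpl; ring).
    assert (Hnz1 : 1 - Cpow q (S i) <> 0). { intros Z. apply (Hnz (S i)). rewrite EP, Z. ring. }
    replace ((Cpow q (S i) * Vs q (Cpow q (S i)) n' - RtoC (INR n') * Cpow (Cpow q (S i)) n') / qpoch q q (S i) -
       Cpow q (S i) / (1 - Cpow q (S i))) with
      ((Cpow q (S i) * (Vs q (Cpow q (S i)) n' - qpoch q q i) - RtoC (INR n') * Cpow (Cpow q (S i)) n') / qpoch q q (S i)).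
    2: { rewrite EP. field. split; auto. }
    eapply Rle_trans. apply (Cmod_div_le _ _ c); auto. unfold Rdiv. apply Rmult_le_compat_r. apply Rlt_le, Rinv_0_lt_compat; auto.
    unfold Cminus. eapply Rle_trans. apply Cmod_triangle. rewrite Cmod_opp, !Cmod_mult, Cmod_R, Rabs_pos_eq by lra.
    rewrite !Cmod_pow. fold r.
    assert (V := V_qpow q n i Hq). fold r in V. fold n' in V.
    assert (K := rprod_Kb r (S i) Hr). assert (G := rprod_ge1 r (S i) (proj1 Hr)).
    assert (Hri : (r ^ S i <= 1)%R) by (apply pow_le1; lra). assert (0 <= r ^ S i)%R by (apply pow_le; lra).
    assert (Hrr : ((r ^ S i) ^ n' <= r ^ n')%R). { rewrite <- pow_mult. apply pow_anti. lra. unfold n'. nia. }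
    assert (Hii : (INR i <= INR n')%R). { apply le_INR. lia. }
    assert (Pi := pos_INR i).
    assert (A1 : (r ^ S i * Cmod (Vs q (Cpow q (S i)) n' - qpoch q q i) <= Kb r * (INR n' * r ^ n'))%R).
    { apply Rle_trans with (1 * (INR i * rprod r (S i) * r ^ n'))%R.
      apply Rmult_le_compat; auto. apply Cmod_ge_0. rewrite Rmult_1_l.
      apply Rle_trans with (INR n' * Kb r * r ^ n')%R. apply Rmult_le_compat_r; auto. apply Rmult_le_compat; lra.
      right; ring. }
    assert (A2 : (INR n' * (r ^ S i) ^ n' <= INR n' * r ^ n')%R). { apply Rmult_le_compat_l; lra. }
    replace ((Kb r + 1) * (INR n' * r ^ n'))%R with (Kb r * (INR n' * r ^ n') + INR n' * r ^ n')%R by ring. unfold Cminus in A1. lra. }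
  pose (Y1 := Ys q (Cpow q (S n')) n' / qpoch q q n').
  fold Y1 in T1.
  assert (T3 : (Cmod (Y1 + sumC F n') <= Kb r * (INR n' * INR n' * r ^ n') / c + INR n' * ((Kb r + 1) * (INR n' * r ^ n') / c))%R).
  { eapply Rle_trans. apply Cmod_triangle. lra. }
  eapply Rle_trans. 
  match goal with |- (Cmod ?X <= _)%R => replace X with (Y1 + sumC F n') end.
  apply T3. 
  { unfold Y1, F. rewrite sumC_minus. ring. }
  right. field. lra. Qed.

Open Scope C_scope.

Definition ind (b : bool) : C := if b then 1 else 0.

Lemma count_filter (P : nat -> bool) n :
  sumC (fun d => ind (P (S d))) n = RtoC (INR (length (filter P (seq 1 n)))).
Proof. induction n. simpl. auto.
  cbn [sumC]. rewrite IHn. rewrite seq_S, filter_app, length_app. simpl.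
  rewrite plus_INR. unfold ind. destruct (P (S n)); simpl; rewrite RtoC_plus; reflexivity. Qed.

Lemma sigma_count m n : (1 <= m <= n)%nat ->
  sumC (fun d => ind (Nat.eqb (m mod (S d)) 0)) n = RtoC (INR (sigma0 m)).
Proof. intros H. replace n with (m + (n - m))%nat by lia. rewrite sumC_split.
  rewrite (count_filter (fun d => Nat.eqb (m mod d) 0) m). unfold sigma0.
  rewrite (sumC_ext _ (fun _ => 0)). rewrite sumC_zero. ring.
  intros i Hi. rewrite Nat.mod_small by lia. unfold ind.
  destruct (Nat.eqb_spec m 0). lia. auto. Qed.

Lemma divmod_step d n : (d <> 0)%nat ->
  (S n mod d = 0 /\ S n / d = S (n / d) /\ d * S (n / d) = S n)%nat \/ (S n mod d <> 0 /\ S n / d = n / d)%nat.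
Proof. intros Hd. assert (E := Nat.div_mod_eq n d). assert (B := Nat.mod_upper_bound n d Hd).
  set (a := (n / d)%nat) in *. set (b := (n mod d)%nat) in *.
  destruct (Nat.eq_dec (S b) d).
  - left. assert (E2 : S n = (d * S a + 0)%nat) by nia. split; [|split].
    + symmetry. apply (Nat.mod_unique _ _ (S a)). lia. auto.
    + symmetry. apply (Nat.div_unique _ _ _ 0). lia. auto.
    + lia.
  - right. assert (E2 : S n = (d * a + S b)%nat) by lia. split.
    + rewrite <- (Nat.mod_unique _ _ a (S b)). lia. lia. auto.
    + symmetry. apply (Nat.div_unique _ _ _ (S b)). lia. auto. Qed.

Lemma Fd_closed q d n : (1 <= d)%nat ->
  (1 - Cpow q d) * sumC (fun i => ind (Nat.eqb ((S i) mod d) 0) * Cpow q (S i)) n = Cpow q d - Cpow q (d * (n / d + 1)).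
Proof. intros Hd. induction n.
  - simpl. rewrite Nat.Div0.div_0_l by lia. rewrite Nat.mul_1_r. ring.
  - cbn [sumC]. destruct (divmod_step d n ltac:(lia)) as [[H1 [H2 H3]]|[H1 H2]].
    + rewrite H1. simpl Nat.eqb. unfold ind. rewrite H2.
      replace ((1 - Cpow q d) * (sumC (fun i : nat => (if (S i mod d =? 0)%nat then 1 else 0) * Cpow q (S i)) n + 1 * Cpow q (S n)))
        with ((1 - Cpow q d) * sumC (fun i : nat => (if (S i mod d =? 0)%nat then 1 else 0) * Cpow q (S i)) n + (1 - Cpow q d) * Cpow q (S n)) by ring.
      unfold ind in IHn. rewrite IHn.
      replace (d * (S (n / d) + 1))%nat with (S n + d)%nat by lia.
      replace (d * (n / d + 1))%nat with (S n) by lia. rewrite Cpow_add_r. ring.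
    + unfold ind. destruct (Nat.eqb_spec (S n mod d) 0). lia. rewrite H2.
      unfold ind in IHn. rewrite <- IHn. ring. Qed.

Lemma S0_partial q n : Csum (fun m => RtoC (INR (sigma0 m)) * Cpow q m) 1 n =
  sumC (fun d => sumC (fun i => ind (Nat.eqb ((S i) mod (S d)) 0) * Cpow q (S i)) n) n.
Proof. rewrite Csum_sumC. rewrite sumC_swap. apply sumC_ext. intros i Hi.
  rewrite (sumC_ext _ (fun d => Cpow q (S i) * ind (Nat.eqb ((S i) mod (S d)) 0))) by (intros; ring).
  rewrite sumC_scal. rewrite sigma_count by lia. ring. Qed.

Lemma partF q : (Cmod q < 1)%R -> S0 q = Clim (Lam q).
Proof. intros Hq. set (r := Cmod q). assert (Hr : (0 <= r < 1)%R) by (split; [apply Cmod_ge_0|auto]).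
  unfold S0. apply cv_Clim.
  replace (Clim (Lam q)) with (0 + Clim (Lam q)) by ring.
  apply cv_ext with (fun n => (Csum (fun m => RtoC (INR (sigma0 m)) * Cpow q m) 1 n - Lam q n) + Lam q n).
  { intros; ring. }
  apply cv_plus. 2: apply Lam_cv; auto.
  apply cv_null with (fun n => / (1 - r) * (INR n * INR n * r ^ n))%R.
  { apply null_scal. apply null_n2pow; auto. apply Rlt_le, Rinv_0_lt_compat. lra. }
  exists 0%nat. intros n _. rewrite S0_partial. unfold Lam. rewrite <- sumC_minus.
  replace (sumC (fun i => sumC (fun i0 => ind (S i0 mod S i =? 0)%nat * Cpow q (S i0)) n - Cpow q (S i) / (1 - Cpow q (S i))) n - 0)
    with (sumC (fun i => sumC (fun i0 => ind (S i0 mod S i =? 0)%nat * Cpow q (S i0)) n - Cpow q (S i) / (1 - Cpow q (S i))) n) by ring.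
  eapply Rle_trans. apply (sumC_bound _ _ (r ^ S n / (1 - r))%R).
  - intros i Hi. set (d := S i).
    assert (A : (1 - r <= Cmod (1 - Cpow q d))%R).
    { eapply Rle_trans. 2: apply Cmod_1m_ge. rewrite Cmod_pow. fold r.
      assert (r ^ d <= r ^ 1)%R by (apply pow_anti; [lra|unfold d; lia]). rewrite pow_1 in H. lra. }
    assert (Hnz : 1 - Cpow q d <> 0). { intros Z. rewrite Z, Cmod_0 in A. lra. }
    assert (F := Fd_closed q d n ltac:(unfold d; lia)).
    replace (sumC (fun i0 => ind (S i0 mod d =? 0)%nat * Cpow q (S i0)) n - Cpow q d / (1 - Cpow q d))
      with (- Cpow q (d * (n / d + 1)) / (1 - Cpow q d)).
    2: { assert (X : sumC (fun i0 => ind (S i0 mod d =? 0)%nat * Cpow q (S i0)) n =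
              (Cpow q d - Cpow q (d * (n / d + 1))) / (1 - Cpow q d)) by (rewrite <- F; field; auto).
         rewrite X. field. auto. }
    eapply Rle_trans. apply (Cmod_div_le _ _ (1 - r)%R). lra. auto.
    rewrite Cmod_opp, Cmod_pow. fold r. unfold Rdiv. apply Rmult_le_compat_r. apply Rlt_le, Rinv_0_lt_compat. lra.
    apply pow_anti. lra.
    assert (E := Nat.div_mod_eq n d). assert (B := Nat.mod_upper_bound n d ltac:(unfold d; lia)). nia.
  - assert (0 <= r ^ n)%R by (apply pow_le; lra).
    assert (r ^ S n <= r ^ n)%R by (apply pow_anti; [lra|lia]).
    destruct n. simpl. lra.
    assert (1 <= INR (S n))%R. { rewrite S_INR. generalize (pos_INR n). lra. }
    unfold Rdiv. rewrite (Rmult_comm (/ (1 - r))).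
    assert (0 < / (1 - r))%R by (apply Rinv_0_lt_compat; lra).
    rewrite <- Rmult_assoc. apply Rmult_le_compat_r. lra.
    apply Rle_trans with (INR (S n) * r ^ S n)%R. apply Rmult_le_compat_l. apply pos_INR. auto.
    assert (0 <= r ^ S n)%R by (apply pow_le; lra).
    assert (0 <= INR (S n) * r ^ S n)%R by (apply Rmult_le_pos; [apply pos_INR|lra]).
    apply aux_nn; auto. Qed.

Open Scope C_scope.

Lemma Cinv_1 : / (RtoC 1) = 1.
Proof. field. Qed.

Definition ee (t : R) : C := (cos t, sin t).

Lemma ee_mult s t : ee s * ee t = ee (s + t).
Proof. unfold ee, Cmult. simpl. apply injective_projections; simpl.
  rewrite cos_plus. ring. rewrite sin_plus. ring. Qed.

Lemma ee_0 : ee 0 = 1.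
Proof. unfold ee. rewrite cos_0, sin_0. auto. Qed.

Lemma ee_pow t n : Cpow (ee t) n = ee (INR n * t).
Proof. induction n. simpl. rewrite Rmult_0_l. rewrite ee_0. auto.
  rewrite Cpow_S, IHn, ee_mult. f_equal. rewrite S_INR. ring. Qed.

Lemma ee_nz t : ee t <> 0.
Proof. intros E. assert (A := sin2_cos2 t). unfold ee in E. injection E. intros H1 H2.
  rewrite H1, H2 in A. unfold Rsqr in A. lra. Qed.

Lemma ee_inv t : / ee t = ee (- t).
Proof. assert (H : ee t * ee (- t) = 1) by (rewrite ee_mult, Rplus_opp_r; apply ee_0).
  assert (Hn := ee_nz t). replace (ee (- t)) with (/ ee t * (ee t * ee (- t))) by (field; auto).
  rewrite H. ring. Qed.

Lemma ee_2pi_nat m : ee (2 * PI * INR m) = 1.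
Proof. unfold ee. replace (2 * PI * INR m)%R with (0 + 2 * INR m * PI)%R by ring.
  rewrite cos_period, sin_period, cos_0, sin_0. auto. Qed.

Lemma ee_2pi k : ee (2 * PI * IZR k) = 1.
Proof. destruct (Z_le_gt_dec 0 k).
  - rewrite <- (Z2Nat.id k) by auto. rewrite <- INR_IZR_INZ. apply ee_2pi_nat.
  - replace k with (- Z.of_nat (Z.to_nat (- k)))%Z by lia. rewrite opp_IZR, <- INR_IZR_INZ.
    replace (2 * PI * - INR (Z.to_nat (- k)))%R with (- (2 * PI * INR (Z.to_nat (- k))))%R by ring.
    rewrite <- ee_inv, ee_2pi_nat. apply Cinv_1. Qed.

Lemma Cmod_ee t : Cmod (ee t) = 1%R.
Proof. unfold Cmod, ee. simpl. assert (A := sin2_cos2 t). unfold Rsqr in A.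
  replace (cos t * (cos t * 1) + sin t * (sin t * 1))%R with 1%R by lra. apply sqrt_1. Qed.

Lemma ee_ne1 t : (0 < t < 2 * PI)%R -> ee t <> 1.
Proof. intros [H1 H2] E. unfold ee in E. injection E. intros Hs Hc.
  destruct (Rtotal_order t PI) as [Hlt|[Heq|Hgt]].
  - assert (A := sin_gt_0 t H1 Hlt). lra.
  - subst. rewrite cos_PI in Hc. lra.
  - assert (A := sin_lt_0 t Hgt H2). lra. Qed.

Definition th (N : nat) : R := (2 * PI / INR N)%R.

Lemma th_N N : (0 < N)%nat -> (th N * INR N = 2 * PI)%R.
Proof. intros H. unfold th. field. apply not_0_INR. lia. Qed.

Lemma th_pos N : (0 < N)%nat -> (0 < th N)%R.
Proof. intros H. unfold th. apply Rdiv_lt_0_compat. generalize PI_RGT_0; lra. apply lt_0_INR. auto. Qed.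

Lemma zeta_pow N k : Cpow (zetaN N) k = ee (INR k * th N).
Proof. change (zetaN N) with (ee (th N)). apply ee_pow. Qed.

Lemma Cpowz_zeta N m : Cpowz (zetaN N) m = ee (IZR m * th N).
Proof. unfold Cpowz. destruct (Z.leb_spec 0 m).
  - rewrite zeta_pow. rewrite INR_IZR_INZ, Z2Nat.id by auto. auto.
  - rewrite zeta_pow. rewrite INR_IZR_INZ, Z2Nat.id by lia. rewrite ee_inv. f_equal.
    rewrite opp_IZR. ring. Qed.



Lemma geo_sum w N : (1 - w) * sumC (Cpow w) N = 1 - Cpow w N.
Proof. induction N. simpl. ring. cbn [sumC].
    replace ((1 - w) * (sumC (Cpow w) N + Cpow w N)) with ((1 - w) * sumC (Cpow w) N + (1 - w) * Cpow w N) by ring.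
    rewrite IHN. simpl. ring. Qed.

Lemma root_sum_zero N (x y a : Z) : (0 < N)%nat -> (x = Z.of_nat N * a + y)%Z -> (0 < Z.abs y < Z.of_nat N)%Z ->
  sumC (fun k => ee (IZR x * INR k * th N)) N = 0.
Proof. intros HN Hx Hy. set (w := ee (IZR x * th N)).
  assert (Hw : forall k, ee (IZR x * INR k * th N) = Cpow w k).
  { intros k. unfold w. rewrite ee_pow. f_equal. ring. }
  rewrite (sumC_ext _ (Cpow w)) by (intros; apply Hw).
  assert (HwN : Cpow w N = 1).
  { rewrite <- Hw. replace (IZR x * INR N * th N)%R with (2 * PI * IZR x)%R.
    apply ee_2pi. rewrite <- (th_N N HN). ring. }
  assert (Hw1 : w <> 1).
  { unfold w. rewrite Hx, plus_IZR, mult_IZR.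
    replace ((IZR (Z.of_nat N) * IZR a + IZR y) * th N)%R with (IZR y * th N + 2 * PI * IZR a)%R.
    2: { rewrite <- INR_IZR_INZ. rewrite <- (th_N N HN). ring. }
    rewrite <- ee_mult, ee_2pi, Cmult_1_r.
    assert (Hth := th_pos N HN). assert (HthN := th_N N HN).
    destruct (Z_le_gt_dec 0 y).
    - apply ee_ne1. assert (0 < IZR y)%R by (apply IZR_lt; lia).
      assert (IZR y < INR N)%R by (rewrite INR_IZR_INZ; apply IZR_lt; lia). split; nra.
    - intros E. assert (E2 : ee (- (IZR y * th N)) = 1) by (rewrite <- ee_inv, E; apply Cinv_1).
      revert E2. apply ee_ne1. assert (IZR y < 0)%R by (apply IZR_lt; lia).
      assert (- IZR y < INR N)%R by (rewrite INR_IZR_INZ, <- opp_IZR; apply IZR_lt; lia). split; nra. }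
  assert (G := geo_sum w N).
  rewrite HwN in G. replace (1 - 1) with (RtoC 0) in G by ring.
  assert (Hw1' : 1 - w <> 0). { intros Z. apply Hw1. replace w with (1 - (1 - w)) by ring. rewrite Z. ring. }
  replace (sumC (Cpow w) N) with (/ (1 - w) * ((1 - w) * sumC (Cpow w) N)) by (field; auto).
  rewrite G. ring. Qed.

Lemma root_sum_N N (x a : Z) : (0 < N)%nat -> (x = Z.of_nat N * a)%Z ->
  sumC (fun k => ee (IZR x * INR k * th N)) N = RtoC (INR N).
Proof. intros HN Hx. rewrite (sumC_ext _ (fun _ => 1)).
  - clear. induction N. auto. cbn [sumC]. rewrite IHN, RtoC_S. auto.
  - intros k Hk. rewrite Hx, mult_IZR, <- INR_IZR_INZ.
    replace (INR N * IZR a * INR k * th N)%R with (2 * PI * (IZR a * INR k))%R.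
    2: { rewrite <- (th_N N HN). ring. }
    rewrite INR_IZR_INZ, <- mult_IZR. apply ee_2pi. Qed.

Lemma sumC_scal_r (F : nat -> C) n c : sumC F n * c = sumC (fun i => F i * c) n.
Proof. rewrite Cmult_comm, <- sumC_scal. apply sumC_ext. intros; ring. Qed.

Lemma fper N (f : nat -> C) : (forall n : nat, (1 <= n)%nat -> f (n + N)%nat = f n) ->
  forall a m, (1 <= m)%nat -> f (m + N * a)%nat = f m.
Proof. intros H a. induction a; intros m Hm. rewrite Nat.mul_0_r, Nat.add_0_r. auto.
  replace (m + N * S a)%nat with ((m + N * a) + N)%nat by lia. rewrite H by lia. auto. Qed.

Lemma ee_prod N i k j :
  Cpowz (zetaN N) ((1 - Z.of_nat (S i)) * Z.of_nat k) * Cpow (Cpow (zetaN N) k) (j - 1) =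
  ee (IZR (Z.of_nat (j - 1) - Z.of_nat i) * INR k * th N).
Proof. rewrite Cpowz_zeta, zeta_pow, ee_pow, ee_mult. f_equal.
  rewrite !INR_IZR_INZ. rewrite mult_IZR, !minus_IZR, Nat2Z.inj_succ, succ_IZR. ring. Qed.

Lemma fourier N (f : nat -> C) : (0 < N)%nat -> (forall n : nat, (1 <= n)%nat -> f (n + N)%nat = f n) ->
  forall j, (1 <= j)%nat ->
  f j = sumC (fun k => ccoef f N (Z.of_nat k) * Cpow (Cpow (zetaN N) k) (j - 1)) N.
Proof. intros HN Hper j Hj. unfold ccoef.
  rewrite (sumC_ext _ (fun k => sumC (fun i => / RtoC (INR N) * (f (S i) * ee (IZR (Z.of_nat (j - 1) - Z.of_nat i) * INR k * th N))) N)).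
  2: { intros k Hk. rewrite Csum_sumC. rewrite <- Cmult_assoc.
       rewrite sumC_scal_r. rewrite <- sumC_scal. apply sumC_ext. intros i Hi.
       rewrite <- ee_prod. ring. }
  rewrite sumC_swap.
  rewrite (sumC_ext _ (fun i => / RtoC (INR N) * f (S i) * sumC (fun k => ee (IZR (Z.of_nat (j - 1) - Z.of_nat i) * INR k * th N)) N)).
  2: { intros i Hi. rewrite <- Cmult_assoc. rewrite <- sumC_scal. rewrite <- sumC_scal. apply sumC_ext. intros; ring. }
  set (a := ((j - 1) / N)%nat). set (i0 := ((j - 1) mod N)%nat).
  assert (Hdm : (j - 1 = N * a + i0)%nat) by (apply Nat.div_mod_eq).
  assert (Hi0 : (i0 < N)%nat) by (apply Nat.mod_upper_bound; lia).
  rewrite (sumC_single _ N i0 Hi0).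
  - rewrite (root_sum_N N _ (Z.of_nat a) HN).
    2: { rewrite Hdm. rewrite Nat2Z.inj_add, Nat2Z.inj_mul. ring. }
    assert (HN0 : RtoC (INR N) <> 0). { intros E. injection E. intros E'. apply (not_0_INR N). lia. auto. }
    replace j with (S i0 + N * a)%nat by lia. rewrite (fper N f Hper a (S i0)) by lia. field. auto.
  - intros i Hi Hne. rewrite (root_sum_zero N _ (Z.of_nat i0 - Z.of_nat i) (Z.of_nat a) HN). ring.
    rewrite Hdm. rewrite Nat2Z.inj_add, Nat2Z.inj_mul. ring. lia. Qed.

Open Scope C_scope.

Lemma aseq_lin (f : nat -> C) (c : nat -> C) (g : nat -> nat -> C) K q n :
  (forall j, (1 <= j)%nat -> f j = sumC (fun k => c k * g k j) K) ->
  aseq f q n = sumC (fun k => c k * aseq (g k) q n) K.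
Proof. intros H. induction n. simpl. rewrite (sumC_ext _ (fun _ => 0)) by (intros; ring). rewrite sumC_zero. auto.
  cbn [aseq]. rewrite IHn, H by lia. rewrite <- sumC_scal, <- sumC_plus. apply sumC_ext. intros; ring. Qed.

Lemma Csum_lin (f : nat -> C) (c : nat -> C) (g : nat -> nat -> C) K n :
  (forall j, (1 <= j)%nat -> f j = sumC (fun k => c k * g k j) K) ->
  Csum f 1 n = sumC (fun k => c k * Csum (g k) 1 n) K.
Proof. intros H. rewrite Csum_sumC. rewrite (sumC_ext _ (fun i => sumC (fun k => c k * g k (S i)) K)).
  2: { intros; apply H; lia. }
  rewrite sumC_swap. apply sumC_ext. intros k Hk. rewrite Csum_sumC, <- sumC_scal. auto. Qed.

Lemma zeta_props N k : (0 < k < N)%nat -> (Cmod (Cpow (zetaN N) k) <= 1)%R /\ Cpow (zetaN N) k <> 1.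
Proof. intros H. rewrite zeta_pow. split. rewrite Cmod_ee. lra.
  apply ee_ne1. assert (HN : (0 < N)%nat) by lia. assert (A := th_N N HN). assert (B := th_pos N HN).
  assert (0 < INR k)%R by (apply lt_0_INR; lia). assert (INR k < INR N)%R by (apply lt_INR; lia). split; nra. Qed.

Theorem theorem1p3 (N : nat) (f : nat -> C) (q : C) :
  (0 < N)%nat ->
  (forall n : nat, (1 <= n)%nat -> f (n + N)%nat = f n) ->
  (Cmod q < 1)%R ->
  filterlim (fun n => Csum f 1 n - aseq f q n) eventually
    (locally
       (ccoef f N 0 * S0 q
        - qpoch_inf q q *
            Csum (fun k => ccoef f N (Z.of_nat k) / qpoch_inf (Cpow (zetaN N) k) q) 1 (N - 1)
        + Csum (fun k => ccoef f N (Z.of_nat k) / (1 - Cpow (zetaN N) k)) 1 (N - 1))).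
Proof.
  intros HN Hper Hq. apply cv_filterlim.
  set (ck := fun k : nat => ccoef f N (Z.of_nat k)).
  set (gk := fun k j : nat => Cpow (Cpow (zetaN N) k) (j - 1)).
  assert (Hf : forall j, (1 <= j)%nat -> f j = sumC (fun k => ck k * gk k j) N).
  { intros j Hj. apply fourier; auto. }
  set (L := fun k : nat => match k with O => S0 q
            | S _ => / (1 - Cpow (zetaN N) k) - qpoch_inf q q / qpoch_inf (Cpow (zetaN N) k) q end).
  apply cv_ext with (fun n => sumC (fun k => ck k * (Csum (gk k) 1 n - aseq (gk k) q n)) N).
  { intros n. rewrite (Csum_lin f ck gk N n Hf), (aseq_lin f ck gk N q n Hf), <- sumC_minus.
    apply sumC_ext. intros; ring. }
  replace (ccoef f N 0 * S0 q - qpoch_inf q q * Csum (fun k => ccoef f N (Z.of_nat k) / qpoch_inf (Cpow (zetaN N) k) q) 1 (N - 1)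
     + Csum (fun k => ccoef f N (Z.of_nat k) / (1 - Cpow (zetaN N) k)) 1 (N - 1)) with (sumC (fun k => ck k * L k) N).
  2: { destruct N as [|N']. lia. rewrite sumC_shift. replace (S N' - 1)%nat with N' by lia.
       rewrite !Csum_sumC. unfold L. change (ck 0%nat) with (ccoef f (S N') 0).
       rewrite (sumC_ext (fun i => ck (S i) * (/ (1 - Cpow (zetaN (S N')) (S i)) - qpoch_inf q q / qpoch_inf (Cpow (zetaN (S N')) (S i)) q))
         (fun i => ccoef f (S N') (Z.of_nat (S i)) / (1 - Cpow (zetaN (S N')) (S i)) -
            qpoch_inf q q * (ccoef f (S N') (Z.of_nat (S i)) / qpoch_inf (Cpow (zetaN (S N')) (S i)) q))).
       2: { intros i Hi. unfold ck. unfold Cdiv. ring. }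
       rewrite sumC_minus, sumC_scal. ring. }
  apply cv_sumN. intros k Hk. apply cv_scal.
  destruct k as [|k].
  -
    simpl L. rewrite (partF q Hq).
    apply cv_ext with (Ys q q). 2: apply partE; auto.
    intros n. rewrite <- partE_Y. f_equal.
    + rewrite !Csum_sumC. apply sumC_ext. intros. unfold gk. simpl. symmetry. apply Cpow_1_l.
    + apply aseq_ext. intros. unfold gk. simpl. symmetry. apply Cpow_1_l.
  - destruct (zeta_props N (S k) ltac:(lia)) as [Hz1 Hz2].
    unfold gk, L. apply partD; auto. Qed.
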